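(* Let $R\ge0$, let $X$ be an $R$-rough geodesic metric space, let $\alpha\colon S\to X$ be an $R$-circle, and consider a tightening sequence for $\alpha$ (with Riemannian circles $S_i$, $R$-circles $\alpha_i\colon S_i\to X$, tightened segments $Q_i$ and maps $\pi^{(i)}\colon S\to S_i$). Suppose the tightening sequence is completely disjoint and $\sum_{i=0}^\infty|Q_i|<|S|$. Let $S_\infty$ be the metric quotient of $(S,\delta)$, where $\delta(x,y)=\lim_i d_{S_i}(\pi^{(i)}(x),\pi^{(i)}(y))$, and let $\sigma\colon S_\infty\to S$ be a section of the quotient map $S\to S_\infty$. Then for every $x\in S_\infty$ the limit $\alpha_\infty(x)=\lim_{i\to\infty}\alpha_i(\pi^{(i)}(\sigma(x)))$ exists, and $\alpha_\infty\colon S_\infty\to X$ is an $R$-circle.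
   Context: $X$ is $R$-rough geodesic if any $x_1,x_2$ are joined by $f\colon[0,\ell]\to X$, $\ell=d(x_1,x_2)$, $f(0)=x_1,f(\ell)=x_2$, with $|d(f(s),f(t))-|s-t||\le R$. An $R$-circle is a map $\beta\colon T\to X$ from a Riemannian circle $T$ (length $|T|$) with $d(\beta(p),\beta(q))\le d_T(p,q)+R$. Tightening sequence for a Riemannian circle $S$: Riemannian circles $S_0=S,S_1,\dots$, spaces $P_i$ (compact intervals or Riemannian circles), maps $\iota_i\colon P_i\hookrightarrow S_i$, $\varphi_i\colon P_i\to S_{i+1}$ with, for each $i$, either (a) $\iota_i,\varphi_i$ continuous unit-speed paths, $\varphi_i$ injective on the interior $\mathring P_i$, $|P_i|\ge|S|/2$, $|S_{i+1}|<|S_i|$; or (b) $P_i=S_i=S_{i+1}$, $\iota_i,\varphi_i$ identities. In case (a) $Q_i=S_i\setminus\iota_i(\mathring P_i)$, $\bar Q_i=S_{i+1}\setminus\varphi_i(\mathring P_i)$ (closed segments, $|\bar Q_i|<|Q_i|$); in case (b) $Q_i=\bar Q_i=\emptyset$. $\pi_i\colon S_i\to S_{i+1}$ equals $\varphi_i\circ\iota_i^{-1}$ on $\iota_i(P_i)$ and is affine from $Q_i$ onto $\bar Q_i$; $\pi^{(i)}=\pi_{i-1}\circ\cdots\circ\pi_0$. With $\mathring P_{0,0}=S$, $\mathring P_{0,j+1}=\mathring P_{0,j}\cap\iota_j(\mathring P_j)$ (in $S_j$), the sequence is completely disjoint if $Q_i\subset\mathring P_{0,i}$ in $S_i$ for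 all $i$. A tightening sequence for the $R$-circle $\alpha$ is a tightening sequence for $S$ with $R$-circles $\alpha_i\colon S_i\to X$, $\alpha_0=\alpha$, and $\alpha_i\circ\iota_i=\alpha_{i+1}\circ\varphi_i$ for all $i$. *)

(* Defs.v *)
From Stdlib Require Import Reals Lra List Sorted.
From Coquelicot Require Import Coquelicot.
Open Scope R_scope.

(** The Riemannian circle of length L > 0 is R / L Z; a point is represented
    by any real number, two reals represent the same point iff [eqmod L]. *)
Definition eqmod (L x y : R) : Prop := exists k : Z, x - y = IZR k * L.

Definition cdist (L x y : R) : R :=
  let u := L * frac_part ((x - y) / L) in Rmin u (L - u).

Definition is_metric {X : Type} (d : X -> X -> R) : Prop :=
  (forall x y, 0 <= d x y) /\ (forall x y, d x y = 0 <-> x = y) /\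
  (forall x y, d x y = d y x) /\ (forall x y z, d x z <= d x y + d y z).

Definition rough_geodesic {X : Type} (d : X -> X -> R) (Rr : R) : Prop :=
  forall x1 x2 : X, exists f : R -> X,
    f 0 = x1 /\ f (d x1 x2) = x2 /\
    forall s t, 0 <= s <= d x1 x2 -> 0 <= t <= d x1 x2 ->
      Rabs (d (f s) (f t) - Rabs (s - t)) <= Rr.

(** an R-circle [f] : T -> X with T the Riemannian circle of length L
    (f given on representatives, hence required to be well defined on T) *)
Definition R_circle {X : Type} (d : X -> X -> R) (Rr L : R) (f : R -> X) : Prop :=
  (forall x y, eqmod L x y -> f x = f y) /\
  forall p q, d (f p) (f q) <= cdist L p q + Rr.

Fixpoint psum (L : R) (g : R -> R) (x : R) (l : list R) : R :=
  match l with
  | nil => 0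
  | y :: l' => cdist L (g x) (g y) + psum L g y l'
  end.

Definition partition (s t : R) (l : list R) : Prop :=
  Sorted Rle (s :: l) /\ last (s :: l) s = t.

Definition path_length_is (L : R) (g : R -> R) (s t m : R) : Prop :=
  (forall l, partition s t l -> psum L g s l <= m) /\
  (forall eps, 0 < eps -> exists l, partition s t l /\ m - eps < psum L g s l).

Definition cont_on (L : R) (g : R -> R) (a b : R) : Prop :=
  forall t, a <= t <= b -> forall eps, 0 < eps -> exists eta, 0 < eta /\
    forall s, a <= s <= b -> Rabs (s - t) < eta -> cdist L (g s) (g t) < eps.

Definition unit_speed (L : R) (g : R -> R) (a b : R) : Prop :=
  cont_on L g a b /\
  forall s t, a <= s -> s <= t -> t <= b -> path_length_is L g s t (t - s).

(** c : [0,m] -> circle of length L is an (arc-length) parametrisation of the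
    closed segment Q (so |Q| = m) *)
Definition segment_param (L : R) (Q : R -> Prop) (c : R -> R) (m : R) : Prop :=
  0 <= m /\ unit_speed L c 0 m /\
  (forall s t, 0 <= s <= m -> 0 <= t <= m -> eqmod L (c s) (c t) -> s = t) /\
  (forall x, Q x <-> exists s, 0 <= s <= m /\ eqmod L x (c s)).

(** Data: lengths L i = |S_i|; R-circles alpha i : S_i -> X; kind i = true for
    case (a) (then P_i = [a i, b i]), false for case (b) (P_i = S_i = S_{i+1});
    iota i : P_i -> S_i, phi i : P_i -> S_{i+1}, pi i : S_i -> S_{i+1}. *)

Definition Qset (L : nat -> R) (a b : nat -> R) (iota : nat -> R -> R) (i : nat)
  : R -> Prop :=
  fun x => ~ exists t, a i < t < b i /\ eqmod (L i) x (iota i t).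

Definition Qbar (L : nat -> R) (a b : nat -> R) (phi : nat -> R -> R) (i : nat)
  : R -> Prop :=
  fun y => ~ exists t, a i < t < b i /\ eqmod (L (S i)) y (phi i t).

Definition tightening_seq {X : Type} (d : X -> X -> R) (Rr : R)
  (L : nat -> R) (alpha : nat -> R -> X) (kind : nat -> bool)
  (a b : nat -> R) (iota phi pi : nat -> R -> R) : Prop :=
  (forall i, 0 < L i) /\
  (forall i, R_circle d Rr (L i) (alpha i)) /\
  (forall i x y, eqmod (L i) x y -> eqmod (L (S i)) (pi i x) (pi i y)) /\
  (forall i, kind i = true ->
     L (S i) < L i /\ L O / 2 <= b i - a i /\
     unit_speed (L i) (iota i) (a i) (b i) /\
     (forall s t, a i <= s <= b i -> a i <= t <= b i ->
        eqmod (L i) (iota i s) (iota i t) -> s = t) /\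
     unit_speed (L (S i)) (phi i) (a i) (b i) /\
     (forall s t, a i < s < b i -> a i < t < b i ->
        eqmod (L (S i)) (phi i s) (phi i t) -> s = t) /\
     (forall t, a i <= t <= b i -> alpha i (iota i t) = alpha (S i) (phi i t)) /\
     (forall t, a i <= t <= b i -> eqmod (L (S i)) (pi i (iota i t)) (phi i t)) /\
     (* pi_i is affine from Q_i onto Qbar_i *)
     (exists (c : R -> R) (m : R) (cb : R -> R) (mb : R),
        0 < m /\ segment_param (L i) (Qset L a b iota i) c m /\
        segment_param (L (S i)) (Qbar L a b phi i) cb mb /\
        forall s, 0 <= s <= m -> eqmod (L (S i)) (pi i (c s)) (cb (s * mb / m)))) /\
  (forall i, kind i = false ->
     L (S i) = L i /\
     (forall t, eqmod (L i) (iota i t) t) /\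
     (forall t, eqmod (L i) (phi i t) t) /\
     (forall t, alpha i (iota i t) = alpha (S i) (phi i t)) /\
     (forall t, eqmod (L (S i)) (pi i (iota i t)) (phi i t))).

(** |Q_i| (Q_i = empty in case (b)) *)
Definition Qlengths (L : nat -> R) (kind : nat -> bool) (a b : nat -> R)
  (iota : nat -> R -> R) (qlen : nat -> R) : Prop :=
  forall i, (kind i = true -> exists c, segment_param (L i) (Qset L a b iota i) c (qlen i))
         /\ (kind i = false -> qlen i = 0).

(** interior P_{0,j}, as a subset of S_j *)
Fixpoint Pint (L : nat -> R) (kind : nat -> bool) (a b : nat -> R)
  (iota phi : nat -> R -> R) (j : nat) : R -> Prop :=
  match j with
  | O => fun _ => True
  | S j' =>
      if kind j' then
        fun y => exists t, a j' < t < b j' /\ Pint L kind a b iota phi j' (iota j' t)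
                           /\ eqmod (L (S j')) y (phi j' t)
      else Pint L kind a b iota phi j'
  end.

Definition completely_disjoint (L : nat -> R) (kind : nat -> bool) (a b : nat -> R)
  (iota phi : nat -> R -> R) : Prop :=
  forall i, kind i = true -> forall x, Qset L a b iota i x -> Pint L kind a b iota phi i x.

Fixpoint picomp (pi : nat -> R -> R) (i : nat) (x : R) : R :=
  match i with
  | O => x
  | S i' => pi i' (picomp pi i' x)
  end.

Definition delta (L : nat -> R) (pi : nat -> R -> R) (x y : R) : R :=
  real (Lim_seq (fun i => cdist (L i) (picomp pi i x) (picomp pi i y))).

(** metric quotient S_infty of (S, delta): classes of delta-distance zero *)
Definition Sinf (L : nat -> R) (pi : nat -> R -> R) : Type :=
  {A : R -> Prop | exists x, A = fun y => delta L pi x y = 0}.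

Definition qmap (L : nat -> R) (pi : nat -> R -> R) (x : R) : Sinf L pi :=
  exist _ (fun y => delta L pi x y = 0) (ex_intro _ x eq_refl).

(* Main.v *)
Require Import Defs.
From Stdlib Require Import Reals Lra Lia List Sorted Classical IndefiniteDescription.
From Coquelicot Require Import Coquelicot.
Open Scope R_scope.


Ltac rabs := unfold Rabs in *; repeat match goal with
  | |- context [Rcase_abs ?x] => destruct (Rcase_abs x)
  | H : context [Rcase_abs ?x] |- _ => destruct (Rcase_abs x)
  end; try lra.

Lemma Z_of_bounds (k : Z) : -1 < IZR k < 1 -> k = 0%Z.
Proof.
  intros [H1 H2]. apply lt_IZR in H1. apply lt_IZR in H2. lia.
Qed.

Lemma IZR_ge1_or (k : Z) : k = 0%Z \/ 1 <= IZR k \/ IZR k <= -1.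
Proof.
  destruct (Z.eq_dec k 0) as [->|H]; [now left|right].
  destruct (Z.lt_ge_cases 0 k) as [H1|H1].
  - left. apply IZR_le. lia.
  - right. apply IZR_le. lia.
Qed.

Lemma eqmod_refl L x : eqmod L x x.
Proof. exists 0%Z. simpl. ring. Qed.

Lemma eqmod_sym L x y : eqmod L x y -> eqmod L y x.
Proof. intros [k Hk]. exists (-k)%Z. rewrite opp_IZR. lra. Qed.

Lemma eqmod_trans L x y z : eqmod L x y -> eqmod L y z -> eqmod L x z.
Proof. intros [k Hk] [j Hj]. exists (k + j)%Z. rewrite plus_IZR. lra. Qed.

Lemma eqmod_plus L x y x' y' : eqmod L x y -> eqmod L x' y' -> eqmod L (x + x') (y + y').
Proof. intros [k Hk] [j Hj]. exists (k + j)%Z. rewrite plus_IZR. lra. Qed.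

Lemma eqmod_opp L x y : eqmod L x y -> eqmod L (- x) (- y).
Proof. intros [k Hk]. exists (-k)%Z. rewrite opp_IZR. lra. Qed.

Lemma eqmod_pm L e x y : (e = 1 \/ e = -1) -> eqmod L x y -> eqmod L (e * x) (e * y).
Proof.
  intros [-> | ->] H. - now rewrite !Rmult_1_l. - replace (-1 * x) with (-x) by ring.
  replace (-1 * y) with (-y) by ring. now apply eqmod_opp.
Qed.

Lemma eqmod_kL L x k : eqmod L (x + IZR k * L) x.
Proof. exists k. ring. Qed.

Lemma eqmod_L L x : eqmod L (x + L) x.
Proof. exists 1%Z. simpl. ring. Qed.

Lemma eqmod_diff L x y : eqmod L (x - y) 0 -> eqmod L x y.
Proof. intros [k Hk]. exists k. lra. Qed.

Lemma eqmod_small L x y : 0 < L -> eqmod L x y -> Rabs (x - y) < L -> x = y.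
Proof.
  intros HL [k Hk] Ha. rewrite Hk in Ha.
  assert (-1 < IZR k < 1).
  { rewrite Rabs_mult, (Rabs_pos_eq L) in Ha by lra.
    assert (Rabs (IZR k) < 1).
    { apply Rmult_lt_reg_r with L; lra. }
    apply Rabs_def2 in H. lra. }
  apply Z_of_bounds in H. subst k. simpl in Hk. lra.
Qed.

Lemma cdist_char L x y : 0 < L ->
  0 <= cdist L x y <= L / 2 /\
  (forall k, cdist L x y <= Rabs (x - y - IZR k * L)) /\
  exists k, cdist L x y = Rabs (x - y - IZR k * L).
Proof.
  intros HL. unfold cdist, frac_part.
  set (z := x - y). set (n := Int_part (z / L)).
  destruct (base_Int_part (z / L)) as [B1 B2]. fold n in B1, B2.
  assert (Hu : L * (z / L - IZR n) = z - IZR n * L) by (field; lra).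
  rewrite Hu.
  assert (Hz1 : IZR n * L <= z).
  { apply Rmult_le_compat_r with (r := L) in B1; [|lra].
    replace (z / L * L) with z in B1 by (field; lra). lra. }
  assert (Hz2 : z < IZR n * L + L).
  { assert (z / L < IZR n + 1) by lra.
    apply Rmult_lt_compat_r with (r := L) in H; [|lra].
    replace (z / L * L) with z in H by (field; lra). lra. }
  split; [|split].
  - unfold Rmin; destruct Rle_dec; lra.
  - intros k. destruct (Z.le_gt_cases k n) as [Hk|Hk].
    + apply IZR_le in Hk.
      assert (IZR k * L <= IZR n * L) by (apply Rmult_le_compat_r; lra).
      rewrite Rabs_pos_eq by lra. unfold Rmin; destruct Rle_dec; lra.
    + assert (Hk' : (n + 1 <= k)%Z) by lia. apply IZR_le in Hk'. rewrite plus_IZR in Hk'.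
      assert ((IZR n + 1) * L <= IZR k * L) by (apply Rmult_le_compat_r; lra).
      rewrite Rabs_left1 by lra. unfold Rmin; destruct Rle_dec; lra.
  - unfold Rmin; destruct Rle_dec.
    + exists n. rewrite Rabs_pos_eq; lra.
    + exists (n + 1)%Z. rewrite plus_IZR. rewrite Rabs_left1; lra.
Qed.

Lemma cdist_nonneg L x y : 0 < L -> 0 <= cdist L x y.
Proof. intros HL; apply (cdist_char L x y HL). Qed.

Lemma cdist_half L x y : 0 < L -> cdist L x y <= L / 2.
Proof. intros HL; apply (cdist_char L x y HL). Qed.

Lemma cdist_le_abs L x y : 0 < L -> cdist L x y <= Rabs (x - y).
Proof.
  intros HL. destruct (cdist_char L x y HL) as [_ [H _]].
  specialize (H 0%Z). simpl in H. now rewrite Rmult_0_l, Rminus_0_r in H.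
Qed.

Lemma cdist_eq_gen L x y x' y' j : 0 < L ->
  (x' - y' = x - y + IZR j * L \/ x' - y' = -(x - y) + IZR j * L) ->
  cdist L x' y' = cdist L x y.
Proof.
  intros HL Hj.
  destruct (cdist_char L x y HL) as [_ [A1 [k0 A2]]].
  destruct (cdist_char L x' y' HL) as [_ [B1 [k1 B2]]].
  destruct Hj as [Hj|Hj].
  - apply Rle_antisym.
    + rewrite A2. specialize (B1 (k0 + j)%Z). rewrite plus_IZR in B1.
      replace (x' - y' - (IZR k0 + IZR j) * L) with (x - y - IZR k0 * L) in B1 by lra. exact B1.
    + rewrite B2. specialize (A1 (k1 - j)%Z). rewrite minus_IZR in A1.
      replace (x - y - (IZR k1 - IZR j) * L) with (x' - y' - IZR k1 * L) in A1 by lra. exact A1.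
  - apply Rle_antisym.
    + rewrite A2. specialize (B1 (j - k0)%Z). rewrite minus_IZR in B1.
      replace (x' - y' - (IZR j - IZR k0) * L) with (- (x - y - IZR k0 * L)) in B1 by lra.
      now rewrite Rabs_Ropp in B1.
    + rewrite B2. specialize (A1 (j - k1)%Z). rewrite minus_IZR in A1.
      replace (x - y - (IZR j - IZR k1) * L) with (- (x' - y' - IZR k1 * L)) in A1 by lra.
      now rewrite Rabs_Ropp in A1.
Qed.

Lemma cdist_sym L x y : 0 < L -> cdist L x y = cdist L y x.
Proof. intros HL. apply cdist_eq_gen with 0%Z; auto. right. simpl. lra. Qed.

Lemma cdist_eqmod L x y x' y' : 0 < L -> eqmod L x x' -> eqmod L y y' ->
  cdist L x' y' = cdist L x y.
Proof.
  intros HL [k Hk] [j Hj]. apply cdist_eq_gen with (j - k)%Z; auto. left.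
  rewrite minus_IZR. lra.
Qed.

Lemma cdist_aff L s r x y : 0 < L -> (s = 1 \/ s = -1) ->
  cdist L (s * x + r) (s * y + r) = cdist L x y.
Proof.
  intros HL Hs. apply cdist_eq_gen with 0%Z; auto. simpl.
  destruct Hs; subst; [left|right]; lra.
Qed.

Lemma cdist_small L x y : 0 < L -> Rabs (x - y) <= L / 2 -> cdist L x y = Rabs (x - y).
Proof.
  intros HL Hs. apply Rle_antisym; [now apply cdist_le_abs|].
  destruct (cdist_char L x y HL) as [_ [_ [k Hk]]]. rewrite Hk.
  destruct (IZR_ge1_or k) as [->|[Hk1|Hk1]].
  - simpl. rewrite Rmult_0_l, Rminus_0_r. lra.
  - assert (L <= IZR k * L) by nra.
    rabs.
  - assert (IZR k * L <= - L) by nra.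
    rabs.
Qed.

Lemma cdist_triangle L x y z : 0 < L -> cdist L x z <= cdist L x y + cdist L y z.
Proof.
  intros HL.
  destruct (cdist_char L x y HL) as [_ [_ [k1 H1]]].
  destruct (cdist_char L y z HL) as [_ [_ [k2 H2]]].
  destruct (cdist_char L x z HL) as [_ [H3 _]].
  specialize (H3 (k1 + k2)%Z). rewrite plus_IZR in H3. rewrite H1, H2.
  eapply Rle_trans; [exact H3|].
  replace (x - z - (IZR k1 + IZR k2) * L) with ((x - y - IZR k1 * L) + (y - z - IZR k2 * L)) by ring.
  apply Rabs_triang.
Qed.

Lemma cdist_zero L x y : 0 < L -> cdist L x y = 0 -> eqmod L x y.
Proof.
  intros HL H. destruct (cdist_char L x y HL) as [_ [_ [k Hk]]].
  exists k. rewrite H in Hk. symmetry in Hk. apply Rabs_eq_0 in Hk. lra.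
Qed.

Lemma cdist_refl L x : 0 < L -> cdist L x x = 0.
Proof.
  intros HL. apply Rle_antisym; [|now apply cdist_nonneg].
  eapply Rle_trans; [apply cdist_le_abs; auto|]. rewrite Rminus_diag, Rabs_R0. lra.
Qed.

Lemma cdist_eqmod0 L x y : 0 < L -> eqmod L x y -> cdist L x y = 0.
Proof.
  intros HL H. rewrite <- (cdist_refl L y HL). apply cdist_eqmod; auto.
  apply eqmod_sym; auto. apply eqmod_refl.
Qed.

Lemma cdist_sign L x y : 0 < L -> exists e, (e = 1 \/ e = -1) /\ eqmod L y (x + e * cdist L x y).
Proof.
  intros HL. destruct (cdist_char L x y HL) as [_ [_ [k Hk]]].
  destruct (Rle_dec 0 (x - y - IZR k * L)).
  - exists (-1). split; [now right|]. rewrite Hk, Rabs_pos_eq by lra. exists (-k)%Z.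
    rewrite opp_IZR. lra.
  - exists 1. split; [now left|]. rewrite Hk, Rabs_left by lra. exists (-k)%Z.
    rewrite opp_IZR. lra.
Qed.

Definition sd (L z : R) : R := z - IZR (Int_part (z / L + / 2)) * L.

Lemma sd_prop L z : 0 < L -> eqmod L z (sd L z) /\ -(L/2) <= sd L z < L / 2.
Proof.
  intros HL. unfold sd. set (n := Int_part (z / L + / 2)).
  destruct (base_Int_part (z / L + /2)) as [B1 B2]. fold n in B1, B2.
  split. { exists n. ring. }
  assert (Hz1 : IZR n * L <= z + L / 2).
  { apply Rmult_le_compat_r with (r := L) in B1; [|lra].
    replace ((z / L + / 2) * L) with (z + L / 2) in B1 by (field; lra). lra. }
  assert (Hz2 : z + L / 2 < IZR n * L + L).
  { assert (z / L + / 2 < IZR n + 1) by lra.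
    apply Rmult_lt_compat_r with (r := L) in H; [|lra].
    replace ((z / L + / 2) * L) with (z + L / 2) in H by (field; lra). lra. }
  lra.
Qed.


Lemma us_le L g a b s t : unit_speed L g a b -> a <= s -> s <= t -> t <= b ->
  cdist L (g s) (g t) <= t - s.
Proof.
  intros [_ H] Hs Hst Ht. destruct (H s t Hs Hst Ht) as [H1 _].
  specialize (H1 (t :: nil)). simpl in H1. rewrite Rplus_0_r in H1. apply H1.
  split; [|reflexivity]. apply Sorted_cons; [apply Sorted_cons; constructor | constructor; exact Hst].
Qed.

Lemma us_le_abs L g a b s t : 0 < L -> unit_speed L g a b -> a <= s <= b -> a <= t <= b ->
  cdist L (g s) (g t) <= Rabs (t - s).
Proof.
  intros HL H Hs Ht. destruct (Rle_dec s t).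
  - rewrite Rabs_pos_eq by lra. eapply us_le; eauto; lra.
  - rewrite cdist_sym by auto. rewrite Rabs_left by lra.
    replace (- (t - s)) with (s - t) by ring. eapply us_le; eauto; lra.
Qed.

Lemma sorted_last_ge (l : list R) x d : Sorted Rle (x :: l) -> x <= last (x :: l) d.
Proof.
  revert x. induction l as [|y l IH]; intros x H; simpl. - lra.
  - inversion H; subst. inversion H3; subst. specialize (IH y H2).
    destruct l; simpl in *; lra.
Qed.

Lemma last_default (l : list R) x d d' : last (x :: l) d = last (x :: l) d'.
Proof.
  revert x. induction l as [|y l IH]; intros x; [reflexivity|].
  change (last (y :: l) d = last (y :: l) d'). apply IH.
Qed.

Lemma psum_tel L g (D : R -> R) s t :
  (forall x y, s <= x <= t -> s <= y <= t -> cdist L (g x) (g y) = Rabs (D y - D x)) ->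
  (forall x y z, s <= x -> x <= y -> y <= z -> z <= t ->
     Rabs (D z - D x) = Rabs (D y - D x) + Rabs (D z - D y)) ->
  forall l x, s <= x <= t -> Sorted Rle (x :: l) -> last (x :: l) x = t ->
  psum L g x l = Rabs (D t - D x).
Proof.
  intros H1 H2. induction l as [|y l IH]; intros x Hx Hs Hl.
  - simpl in *. subst. rewrite Rminus_diag, Rabs_R0. reflexivity.
  - simpl psum. apply Sorted_inv in Hs as [Hs' Hrel]. apply HdRel_inv in Hrel.
    assert (Hl' : last (y :: l) y = t).
    { rewrite <- Hl. simpl. destruct l; auto. apply last_default. }
    assert (Hy : y <= t). { rewrite <- Hl'. now apply sorted_last_ge. }
    rewrite IH; auto; try lra.
    rewrite H1 by lra. symmetry. apply H2; lra.
Qed.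

Lemma lip_cont (f : R -> R) : (forall w w', Rabs (f w - f w') <= Rabs (w - w')) -> continuity f.
Proof.
  intros H x eps Heps. exists eps. split; auto. intros y [_ Hy].
  simpl in *. unfold R_dist in *. eapply Rle_lt_trans; [apply H|]. auto.
Qed.

Definition clamp (s t w : R) := Rmax s (Rmin t w).

Lemma clamp_in s t w : s <= t -> s <= clamp s t w <= t.
Proof. intros. unfold clamp, Rmax, Rmin. repeat destruct Rle_dec; lra. Qed.

Lemma clamp_id s t w : s <= w <= t -> clamp s t w = w.
Proof. intros. unfold clamp, Rmax, Rmin. repeat destruct Rle_dec; lra. Qed.

Lemma clamp_lip s t w w' : s <= t -> Rabs (clamp s t w - clamp s t w') <= Rabs (w - w').
Proof. intros. unfold clamp, Rmax, Rmin. repeat destruct Rle_dec; rabs. Qed.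

Lemma LOC L g a b s t : 0 < L -> unit_speed L g a b ->
  (forall p q, a < p < b -> a < q < b -> eqmod L (g p) (g q) -> p = q) ->
  a <= s -> s <= t -> t <= b -> t - s <= L / 4 -> cdist L (g s) (g t) = t - s.
Proof.
  intros HL Hu Hinj Has Hst Htb Hsmall.
  set (D := fun x => sd L (g x - g s)).
  assert (HD : forall x, eqmod L (g x - g s) (D x) /\ -(L/2) <= D x < L/2).
  { intros x. apply sd_prop; auto. }
  assert (F1 : forall x, s <= x <= t -> Rabs (D x) <= x - s).
  { intros x Hx. destruct (HD x) as [E1 E2].
    rewrite <- (Rminus_0_r (D x)). rewrite <- (cdist_small L (D x) 0) by (auto; rewrite Rminus_0_r; rabs).
    rewrite (cdist_eqmod L (g x - g s) 0) by (auto using eqmod_refl).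
    rewrite (cdist_eq_gen L (g s) (g x) (g x - g s) 0 0%Z) by (auto; right; simpl; lra).
    eapply us_le; eauto; lra. }
  assert (F2 : forall x y, s <= x <= t -> s <= y <= t -> cdist L (g x) (g y) = Rabs (D y - D x)).
  { intros x y Hx Hy.
    destruct (HD x) as [[k1 E1] _]. destruct (HD y) as [[k2 E2] _].
    rewrite <- (cdist_eq_gen L (g x) (g y) (D y) (D x) (k1 - k2)%Z) by (auto; right; rewrite minus_IZR; lra).
    apply cdist_small; auto. pose proof (F1 x Hx). pose proof (F1 y Hy). rabs. }
  assert (Lip : forall x y, s <= x <= t -> s <= y <= t -> Rabs (D y - D x) <= Rabs (y - x)).
  { intros x y Hx Hy. rewrite <- F2 by auto. eapply us_le_abs; eauto; lra. }
  set (E := fun w => D (clamp s t w)).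
  assert (Ec : continuity E).
  { apply lip_cont. intros w w'. unfold E.
    eapply Rle_trans; [|apply (clamp_lip s t w w' Hst)].
    apply (Lip (clamp s t w') (clamp s t w)); apply clamp_in; auto. }
  assert (EE : forall w, s <= w <= t -> E w = D w). { intros. unfold E. now rewrite clamp_id. }
  assert (Inj : forall p q, s <= p <= t -> s <= q <= t -> a < p < b -> a < q < b -> D p = D q -> p = q).
  { intros p q Hp Hq Hp' Hq' Hpq. apply Hinj; auto.
    destruct (HD p) as [[k1 E1] _]. destruct (HD q) as [[k2 E2] _].
    exists (k1 - k2)%Z. rewrite minus_IZR. lra. }
  assert (Btw : forall x y z, s <= x -> x <= y -> y <= z -> z <= t ->
     Rabs (D z - D x) = Rabs (D y - D x) + Rabs (D z - D y)).
  { intros x y z H1 H2 H3 H4.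
    destruct (Rle_dec (D y) (Rmax (D x) (D z))) as [Hm|Hm];
    [destruct (Rle_dec (Rmin (D x) (D z)) (D y)) as [Hn|Hn]|].
    - unfold Rmax, Rmin in *; repeat destruct Rle_dec; rabs.
    - exfalso. apply Rnot_le_lt in Hn.
      set (c := (Rmin (D x) (D z) + D y) / 2).
      assert (Hc1 : D y < c) by (unfold c; lra).
      assert (Hc2 : c < Rmin (D x) (D z)) by (unfold c; lra).
      assert (Hx : c < D x) by (unfold Rmin in *; destruct Rle_dec; lra).
      assert (Hz : c < D z) by (unfold Rmin in *; destruct Rle_dec; lra).
      destruct (IVT_gen E x y c Ec) as [p [Hp1 Hp2]].
      { rewrite !EE by lra. unfold Rmin, Rmax; destruct Rle_dec; lra. }
      destruct (IVT_gen E y z c Ec) as [q [Hq1 Hq2]].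
      { rewrite !EE by lra. unfold Rmin, Rmax; destruct Rle_dec; lra. }
      assert (Hp3 : x <= p <= y) by (unfold Rmin, Rmax in Hp1; destruct Rle_dec; lra).
      assert (Hq3 : y <= q <= z) by (unfold Rmin, Rmax in Hq1; destruct Rle_dec; lra).
      rewrite EE in Hp2, Hq2 by lra.
      assert (p <> x) by (intro; subst; lra). assert (p <> y) by (intro; subst; lra).
      assert (q <> z) by (intro; subst; lra). assert (q <> y) by (intro; subst; lra).
      assert (p = q) by (apply Inj; try lra). lra.
    - exfalso. apply Rnot_le_lt in Hm.
      set (c := (Rmax (D x) (D z) + D y) / 2).
      assert (Hc1 : c < D y) by (unfold c; lra).
      assert (Hc2 : Rmax (D x) (D z) < c) by (unfold c; lra).
      assert (Hx : D x < c) by (unfold Rmax in *; destruct Rle_dec; lra).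
      assert (Hz : D z < c) by (unfold Rmax in *; destruct Rle_dec; lra).
      destruct (IVT_gen E x y c Ec) as [p [Hp1 Hp2]].
      { rewrite !EE by lra. unfold Rmin, Rmax; destruct Rle_dec; lra. }
      destruct (IVT_gen E y z c Ec) as [q [Hq1 Hq2]].
      { rewrite !EE by lra. unfold Rmin, Rmax; destruct Rle_dec; lra. }
      assert (Hp3 : x <= p <= y) by (unfold Rmin, Rmax in Hp1; destruct Rle_dec; lra).
      assert (Hq3 : y <= q <= z) by (unfold Rmin, Rmax in Hq1; destruct Rle_dec; lra).
      rewrite EE in Hp2, Hq2 by lra.
      assert (p <> x) by (intro; subst; lra). assert (p <> y) by (intro; subst; lra).
      assert (q <> z) by (intro; subst; lra). assert (q <> y) by (intro; subst; lra).
      assert (p = q) by (apply Inj; try lra). lra. }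
  apply Rle_antisym; [eapply us_le; eauto|].
  destruct Hu as [_ Hu]. destruct (Hu s t Has Hst Htb) as [_ Happ].
  apply Rnot_lt_le. intro Hlt.
  destruct (Happ (t - s - cdist L (g s) (g t))) as [l [[Hl1 Hl2] Hl3]]; [lra|].
  rewrite (psum_tel L g D s t F2 Btw l s) in Hl3 by (auto; lra).
  rewrite <- F2 in Hl3 by lra. lra.
Qed.


Lemma LOC_sign L g a b s t : 0 < L -> unit_speed L g a b ->
  (forall p q, a < p < b -> a < q < b -> eqmod L (g p) (g q) -> p = q) ->
  a <= s -> s <= t -> t <= b -> t - s <= L / 4 ->
  exists e, (e = 1 \/ e = -1) /\ eqmod L (g t) (g s + e * (t - s)).
Proof.
  intros. destruct (cdist_sign L (g s) (g t) H) as [e [He1 He2]].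
  exists e. split; auto. rewrite (LOC L g a b s t) in He2 by auto. auto.
Qed.

Lemma SA L g x y z e1 e2 e3 : 0 < L -> x < y -> y <= z -> z - x <= L / 4 ->
  (e1 = 1 \/ e1 = -1) -> (e2 = 1 \/ e2 = -1) -> (e3 = 1 \/ e3 = -1) ->
  eqmod L (g y) (g x + e1 * (y - x)) -> eqmod L (g z) (g x + e2 * (z - x)) ->
  eqmod L (g z) (g y + e3 * (z - y)) -> e1 = e2.
Proof.
  intros HL H1 H2 H3 E1 E2 E3 [k1 K1] [k2 K2] [k3 K3].
  assert (Heq : e2 * (z - x) = e1 * (y - x) + e3 * (z - y)).
  { apply eqmod_small with L; auto.
    - exists (k3 + k1 - k2)%Z. rewrite minus_IZR, plus_IZR. lra.
    - destruct E1, E2, E3; subst; rabs. }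
  destruct E1, E2, E3; subst; lra.
Qed.

Lemma LIN L g a b : 0 < L -> a <= b -> unit_speed L g a b ->
  (forall p q, a < p < b -> a < q < b -> eqmod L (g p) (g q) -> p = q) ->
  exists e, (e = 1 \/ e = -1) /\ forall t, a <= t <= b -> eqmod L (g t) (g a + e * (t - a)).
Proof.
  intros HL Hab Hu Hinj.
  destruct (Req_dec a b) as [<-|Hne].
  { exists 1. split; [now left|]. intros t Ht. replace t with a by lra.
    replace (g a + 1 * (a - a)) with (g a) by ring. apply eqmod_refl. }
  set (h := L / 8).
  set (t1 := Rmin b (a + h)).
  assert (Ht1 : a < t1 <= b /\ t1 <= a + h) by (unfold t1, h, Rmin; destruct Rle_dec; lra).
  destruct (LOC_sign L g a b a t1 HL Hu Hinj) as [eps [Heps Hg1]]; try lra.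
  { unfold h in Ht1; lra. }
  exists eps. split; auto.
  assert (P : forall n, (1 <= n)%nat -> forall t, a <= t <= b -> t <= a + INR n * h ->
                eqmod L (g t) (g a + eps * (t - a))).
  { intros n Hn. induction Hn as [|n Hn IH]; intros t Ht Htn.
    - destruct (Req_dec t a) as [->|Hta].
      { replace (g a + eps * (a - a)) with (g a) by ring. apply eqmod_refl. }
      simpl in Htn. rewrite Rmult_1_l in Htn.
      assert (t <= t1) by (unfold t1, Rmin; destruct Rle_dec; lra).
      destruct (LOC_sign L g a b a t HL Hu Hinj) as [e1 [He1 G1]]; try lra.
      { unfold h in Htn; lra. }
      destruct (LOC_sign L g a b t t1 HL Hu Hinj) as [e3 [He3 G3]]; try lra.
      { unfold h in Ht1; lra. }
      assert (e1 = eps) by (apply (SA L g a t t1 e1 eps e3); auto; try lra; unfold h in Ht1; lra).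
      subst; auto.
    - rewrite S_INR in Htn.
      assert (Hn1 : 1 <= INR n) by (apply (le_INR 1); auto).
      destruct (Rle_dec t (a + INR n * h)) as [Hle|Hlt]; [now apply IH|].
      apply Rnot_le_lt in Hlt.
      assert (Hh : 0 < h) by (unfold h; lra).
      set (y := a + INR n * h). set (x := y - h / 2).
      assert (Hxa : a <= x) by (unfold x, y; nra).
      assert (Hyb : y < t) by (unfold y; lra).
      assert (Gx := IH x ltac:(unfold x, y in *; lra) ltac:(unfold x, y; lra)).
      assert (Gy := IH y ltac:(unfold y in *; split; nra) ltac:(unfold y; lra)).
      destruct (LOC_sign L g a b x y HL Hu Hinj) as [e1 [He1 G1]]; try (unfold x, y, h in *; lra).
      destruct (LOC_sign L g a b x t HL Hu Hinj) as [e2 [He2 G2]]; try (unfold x, y, h in *; lra).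
      destruct (LOC_sign L g a b y t HL Hu Hinj) as [e3 [He3 G3]]; try (unfold x, y, h in *; lra).
      assert (e1 = e2) by (apply (SA L g x y t e1 e2 e3); auto; unfold x, y, h in *; lra).
      subst e2.
      assert (e1 = eps).
      { destruct Gx as [k1 K1]. destruct Gy as [k2 K2]. destruct G1 as [k3 K3].
        assert (Heq : e1 * (y - x) = eps * (y - x)).
        { apply eqmod_small with L; auto.
          - exists (k2 - k1 - k3)%Z. rewrite !minus_IZR. lra.
          - unfold x, h; destruct He1, Heps; subst; rabs. }
        unfold x in Heq. destruct He1, Heps; subst; lra. }
      subst e1. eapply eqmod_trans; [exact G2|].
      destruct Gx as [k K]. exists k. lra. }
  intros t Ht.
  destruct (INR_unbounded ((t - a) / h)) as [n Hn].
  apply (P (S n)); auto. lia. rewrite S_INR.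
  assert (Hh : 0 < h) by (unfold h; lra).
  assert (t - a < INR n * h).
  { apply Rmult_lt_compat_r with (r := h) in Hn; auto.
    replace ((t - a) / h * h) with (t - a) in Hn by (field; lra). lra. }
  nra.
Qed.


Definition inQ (L l x : R) : Prop := ~ exists tau, 0 < tau < l /\ eqmod L x tau.

Lemma inQ_eqmod L l x y : eqmod L x y -> inQ L l x -> inQ L l y.
Proof.
  intros H Hx [tau [Ht Hy]]. apply Hx. exists tau. split; auto. eapply eqmod_trans; eauto.
Qed.

Lemma inQ_refl L l x : inQ L l x -> inQ L l (l - x).
Proof.
  intros Hx [tau [Ht [k Hk]]]. apply Hx. exists (l - tau). split; [lra|].
  exists (- k)%Z. rewrite opp_IZR. lra.
Qed.

Lemma inQ_l L l : 0 < l < L -> inQ L l l.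
Proof.
  intros Hl [tau [Ht Hm]]. assert (l = tau) by (apply eqmod_small with L; auto; try lra; rabs).
  lra.
Qed.

Lemma reduce_mod L W : 0 < L -> exists W0 k, W = W0 + IZR k * L /\ 0 <= W0 < L.
Proof.
  intros HL. set (n := Int_part (W / L)).
  destruct (base_Int_part (W / L)) as [B1 B2]. fold n in B1, B2.
  exists (W - IZR n * L), n. split; [ring|].
  assert (Hz1 : IZR n * L <= W).
  { apply Rmult_le_compat_r with (r := L) in B1; [|lra].
    replace (W / L * L) with W in B1 by (field; lra). lra. }
  assert (Hz2 : W < IZR n * L + L).
  { assert (W / L < IZR n + 1) by lra.
    apply Rmult_lt_compat_r with (r := L) in H; [|lra].
    replace (W / L * L) with W in H by (field; lra). lra. }
  lra.
Qed.

Lemma ARC1_0 L l m W : 0 < L -> 0 < l <= L -> 0 <= m -> 0 <= W < L ->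
  (forall s, 0 <= s <= m -> inQ L l (W + s)) ->
  (forall x, inQ L l x -> exists s, 0 <= s <= m /\ eqmod L x (W + s)) ->
  (forall s t, 0 <= s <= m -> 0 <= t <= m -> eqmod L (W + s) (W + t) -> s = t) ->
  m = L - l /\ (0 < m -> W = l).
Proof.
  intros HL Hl Hm HW H1 H2 H3.
  assert (HmL : m < L).
  { apply Rnot_le_lt. intro. assert (0 = L) by (apply H3; try lra; exists (-1)%Z; simpl; lra). lra. }
  assert (HW0 : W = 0 \/ l <= W).
  { destruct (Rlt_dec W l) as [Hlt|]; [|right; lra].
    destruct (Req_dec W 0) as [|Hne]; [now left|].
    exfalso. apply (H1 0); [lra|]. exists W. split; [lra|]. rewrite Rplus_0_r. apply eqmod_refl. }
  destruct HW0 as [HW0|HW0].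
  - subst W.
    assert (Hm0 : m = 0).
    { destruct (Req_dec m 0) as [|Hne]; auto. exfalso.
      set (s := Rmin m l / 2).
      assert (0 < s < l /\ s <= m) by (unfold s, Rmin; destruct Rle_dec; lra).
      apply (H1 s); [lra|]. exists s. split; [lra|]. rewrite Rplus_0_l. apply eqmod_refl. }
    subst m. split; [|lra].
    destruct (Req_dec l L) as [|Hne]; [lra|]. exfalso.
    destruct (H2 l (inQ_l L l ltac:(lra))) as [s [Hs Hs']].
    assert (l = 0 + s) by (apply eqmod_small with L; auto; rabs). lra.
  - assert (HlL : l < L) by lra.
    assert (HWm : W + m <= L).
    { apply Rnot_lt_le. intro Hc. set (s := L - W + Rmin l (W + m - L) / 2).
      assert (Hs : 0 <= s <= m /\ 0 < W + s - L < l) by (unfold s, Rmin; destruct Rle_dec; lra).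
      apply (H1 s); [lra|]. exists (W + s - L). split; [lra|]. exists 1%Z. simpl. lra. }
    destruct (H2 l (inQ_l L l ltac:(lra))) as [sl [Hsl Hsl']].
    assert (l = W + sl) by (apply eqmod_small with L; auto; rabs).
    assert (HWl : W = l) by lra. subst W.
    split; [|auto].
    apply Rle_antisym; [lra|]. apply Rnot_lt_le. intro Hc.
    set (x := (l + m + L) / 2).
    assert (Hx : inQ L l x).
    { intros [tau [Ht Hm']]. assert (x = tau) by (apply eqmod_small with L; auto; unfold x; rabs).
      unfold x in *; lra. }
    destruct (H2 x Hx) as [s [Hs Hs']].
    assert (x = l + s) by (apply eqmod_small with L; auto; unfold x; rabs).
    unfold x in *; lra.
Qed.

Lemma ARC1 L l m W : 0 < L -> 0 < l <= L -> 0 <= m ->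
  (forall s, 0 <= s <= m -> inQ L l (W + s)) ->
  (forall x, inQ L l x -> exists s, 0 <= s <= m /\ eqmod L x (W + s)) ->
  (forall s t, 0 <= s <= m -> 0 <= t <= m -> eqmod L (W + s) (W + t) -> s = t) ->
  m = L - l /\ (0 < m -> eqmod L W l).
Proof.
  intros HL Hl Hm H1 H2 H3.
  destruct (reduce_mod L W HL) as [W0 [k [HWk HW0]]].
  assert (E : forall s, eqmod L (W + s) (W0 + s)).
  { intros s. exists k. lra. }
  destruct (ARC1_0 L l m W0 HL Hl Hm HW0) as [R1 R2].
  - intros s Hs. eapply inQ_eqmod; [apply E|]. auto.
  - intros x Hx. destruct (H2 x Hx) as [s [Hs Hs']]. exists s. split; auto.
    eapply eqmod_trans; [exact Hs'|apply E].
  - intros s t Hs Ht Hst. apply H3; auto.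
    eapply eqmod_trans; [apply E|]. eapply eqmod_trans; [exact Hst|]. apply eqmod_sym, E.
  - split; auto. intros Hm0. rewrite <- (R2 Hm0). exists k. lra.
Qed.

Lemma ARC L l m W z : 0 < L -> 0 < l <= L -> 0 <= m -> (z = 1 \/ z = -1) ->
  (forall s, 0 <= s <= m -> inQ L l (W + z * s)) ->
  (forall x, inQ L l x -> exists s, 0 <= s <= m /\ eqmod L x (W + z * s)) ->
  (forall s t, 0 <= s <= m -> 0 <= t <= m -> eqmod L (W + z * s) (W + z * t) -> s = t) ->
  m = L - l /\ (0 < m -> (z = 1 /\ eqmod L W l) \/ (z = -1 /\ eqmod L W 0)).
Proof.
  intros HL Hl Hm [-> | ->] H1 H2 H3.
  - destruct (ARC1 L l m W HL Hl Hm) as [R1 R2].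
    + intros s Hs. specialize (H1 s Hs). rewrite Rmult_1_l in H1. auto.
    + intros x Hx. destruct (H2 x Hx) as [s [Hs Hs']]. exists s. rewrite Rmult_1_l in Hs'. auto.
    + intros s t Hs Ht Hst. apply H3; auto. now rewrite !Rmult_1_l.
    + split; auto.
  - destruct (ARC1 L l m (l - W) HL Hl Hm) as [R1 R2].
    + intros s Hs. replace (l - W + s) with (l - (W + -1 * s)) by ring. apply inQ_refl. auto.
    + intros x Hx. destruct (H2 (l - x) (inQ_refl _ _ _ Hx)) as [s [Hs [k Hk]]].
      exists s. split; auto. exists (-k)%Z. rewrite opp_IZR. lra.
    + intros s t Hs Ht [k Hk]. apply H3; auto. exists (-k)%Z. rewrite opp_IZR. lra.
    + split; auto. intros Hm0. right. split; auto. destruct (R2 Hm0) as [k Hk]. exists (-k)%Z.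
      rewrite opp_IZR. lra.
Qed.


Lemma eqmod_lin L e r x y : (e = 1 \/ e = -1) -> eqmod L x y -> eqmod L (e * x + r) (e * y + r).
Proof. intros He H. apply eqmod_plus; [now apply eqmod_pm|apply eqmod_refl]. Qed.

Lemma eqmod_eq L x y : x = y -> eqmod L x y.
Proof. intros ->. apply eqmod_refl. Qed.

Lemma SEGQ L a b (g : R -> R) u e (Q : R -> Prop) c m :
  0 < L -> a < b -> b - a <= L -> (e = 1 \/ e = -1) ->
  (forall t, a <= t <= b -> eqmod L (g t) (u + e * (t - a))) ->
  (forall x, Q x <-> ~ exists t, a < t < b /\ eqmod L x (g t)) ->
  segment_param L Q c m ->
  m = L - (b - a) /\
  (0 < m -> (forall s, 0 <= s <= m -> eqmod L (c s) (u + e * ((b - a) + s))) \/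
            (forall s, 0 <= s <= m -> eqmod L (c s) (u - e * s))).
Proof.
  intros HL Hab Hl He Hg HQ [Hm [Hu [Hinj HQc]]].
  assert (Hee : e * e = 1) by (destruct He; subst; ring).
  assert (Qc : forall x, Q x <-> inQ L (b - a) (e * (x - u))).
  { intros x. rewrite HQ. split.
    - intros H [tau [Ht Hx]]. apply H. exists (a + tau). split; [lra|].
      eapply eqmod_trans; [|apply eqmod_sym, Hg; lra].
      apply (eqmod_lin L e u) in Hx; auto.
      replace (e * (e * (x - u)) + u) with x in Hx by (rewrite <- Rmult_assoc, Hee; ring).
      replace (u + e * (a + tau - a)) with (e * tau + u) by ring. exact Hx.
    - intros H [t [Ht Hx]]. apply H. exists (t - a). split; [lra|].
      eapply eqmod_trans; [apply eqmod_eq; instantiate (1 := e * x + - e * u); ring|].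
      eapply eqmod_trans. { apply (eqmod_lin L e (- e * u)); [auto|].
        eapply eqmod_trans; [exact Hx|apply Hg; lra]. }
      apply eqmod_eq. replace (e * (u + e * (t - a)) + - e * u) with ((e * e) * (t - a)) by ring.
      rewrite Hee; ring. }
  destruct (LIN L c 0 m HL Hm Hu) as [eta [Heta Hc]].
  { intros p q Hp Hq Hpq. apply Hinj; auto; lra. }
  assert (Hc' : forall s, 0 <= s <= m -> eqmod L (e * (c s - u)) (e * (c 0 - u) + (e * eta) * s)).
  { intros s Hs. specialize (Hc s Hs). apply (eqmod_lin L e (- e * u)) in Hc; auto.
    eapply eqmod_trans; [|eapply eqmod_trans; [exact Hc|]]; apply eqmod_eq; ring. }
  assert (Hz : e * eta = 1 \/ e * eta = -1) by (destruct He, Heta; subst; [left|right|right|left]; ring).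
  destruct (ARC L (b - a) m (e * (c 0 - u)) (e * eta) HL ltac:(lra) Hm Hz) as [R1 R2].
  - intros s Hs. eapply inQ_eqmod; [apply Hc'; auto|]. apply Qc. apply HQc. exists s. split; auto.
    apply eqmod_refl.
  - intros x Hx. assert (HQx : Q (e * x + u)).
    { apply Qc. replace (e * (e * x + u - u)) with ((e * e) * x) by ring. rewrite Hee, Rmult_1_l. auto. }
    apply HQc in HQx. destruct HQx as [s [Hs Hs']]. exists s. split; auto.
    apply (eqmod_lin L e (- e * u)) in Hs'; auto.
    eapply eqmod_trans; [|eapply eqmod_trans; [exact Hs'|]].
    + apply eqmod_eq. replace (e * (e * x + u) + - e * u) with ((e * e) * x) by ring. rewrite Hee; ring.
    + eapply eqmod_trans; [|apply Hc'; auto]. apply eqmod_eq; ring.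
  - intros s t Hs Ht Hst. apply Hinj; auto.
    assert (eqmod L (e * (c s - u)) (e * (c t - u))).
    { eapply eqmod_trans; [apply Hc'; auto|]. eapply eqmod_trans; [exact Hst|]. apply eqmod_sym, Hc'; auto. }
    apply (eqmod_lin L e u) in H; auto.
    replace (e * (e * (c s - u)) + u) with (c s) in H by (rewrite <- Rmult_assoc, Hee; ring).
    replace (e * (e * (c t - u)) + u) with (c t) in H by (rewrite <- Rmult_assoc, Hee; ring). exact H.
  - split; auto. intros Hm0. destruct (R2 Hm0) as [[Hz1 HW]|[Hz1 HW]].
    + left. intros s Hs. specialize (Hc s Hs).
      assert (eta = e) by (destruct He, Heta; subst; lra). subst eta.
      apply (eqmod_lin L e u) in HW; auto.
      eapply eqmod_trans; [exact Hc|]. replace (u + e * (b - a + s)) with ((e * (b - a) + u) + e * s) by ring.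
      apply eqmod_plus; [|apply eqmod_eq; ring].
      eapply eqmod_trans; [|exact HW]. apply eqmod_eq.
      replace (e * (e * (c 0 - u)) + u) with ((e * e) * (c 0 - u) + u) by ring. rewrite Hee; ring.
    + right. intros s Hs. specialize (Hc s Hs).
      assert (eta = - e) by (destruct He, Heta; subst; lra). subst eta.
      apply (eqmod_lin L e u) in HW; auto.
      eapply eqmod_trans; [exact Hc|]. replace (u - e * s) with ((e * 0 + u) + - e * s) by ring.
      apply eqmod_plus; [|apply eqmod_eq; ring].
      eapply eqmod_trans; [|exact HW]. apply eqmod_eq.
      replace (e * (e * (c 0 - u)) + u) with ((e * e) * (c 0 - u) + u) by ring. rewrite Hee; ring.
Qed.


Definition phik (L l : R) (k : Z) (tau : R) : R :=
  IZR k * (L - l) + Rmin (tau - l - IZR k * L) (L - l).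
Definition Jf (L l tau : R) : Z := (up ((tau - l) / L) - 1)%Z.
Definition Phi (L l tau : R) : R := phik L l (Jf L l tau) tau.
Definition Gf (L l kap tau : R) : R := tau - (1 - kap) * Phi L l tau.

Section G.
Variables L l : R.
Hypothesis HL : 0 < l < L.

Lemma J_spec tau : IZR (Jf L l tau) * L <= tau - l < IZR (Jf L l tau) * L + L.
Proof.
  unfold Jf. rewrite minus_IZR. destruct (archimed ((tau - l) / L)) as [A1 A2].
  set (x := (tau - l) / L) in *.
  assert (tau - l = x * L) by (unfold x; field; lra).
  split; simpl; nra.
Qed.

Lemma phik_le_Phi k tau : phik L l k tau <= Phi L l tau.
Proof.
  unfold Phi. set (J := Jf L l tau). pose proof (J_spec tau) as HJ. fold J in HJ.
  unfold phik. destruct (Z.lt_trichotomy k J) as [Hk|[Hk|Hk]].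
  - assert (Hk' : (k + 1 <= J)%Z) by lia. apply IZR_le in Hk'. rewrite plus_IZR in Hk'.
    assert ((IZR k + 1) * (L - l) <= IZR J * (L - l)) by (apply Rmult_le_compat_r; lra).
    unfold Rmin; repeat destruct Rle_dec; nra.
  - subst; lra.
  - assert (Hk' : (J + 1 <= k)%Z) by lia. apply IZR_le in Hk'. rewrite plus_IZR in Hk'.
    assert ((IZR J + 1) * l <= IZR k * l) by (apply Rmult_le_compat_r; lra).
    unfold Rmin; repeat destruct Rle_dec; nra.
Qed.

Lemma phik_mono k tau tau' : tau <= tau' -> 0 <= phik L l k tau' - phik L l k tau <= tau' - tau.
Proof. intros. unfold phik, Rmin. repeat destruct Rle_dec; lra. Qed.

Lemma Phi_mono tau tau' : tau <= tau' -> 0 <= Phi L l tau' - Phi L l tau <= tau' - tau.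
Proof.
  intros H. split.
  - pose proof (phik_le_Phi (Jf L l tau) tau'). pose proof (phik_mono (Jf L l tau) tau tau' H).
    unfold Phi at 2. lra.
  - pose proof (phik_le_Phi (Jf L l tau') tau). pose proof (phik_mono (Jf L l tau') tau tau' H).
    unfold Phi at 1. lra.
Qed.

Lemma phik_shift k j tau : phik L l (k + j) (tau + IZR j * L) = phik L l k tau + IZR j * (L - l).
Proof.
  unfold phik. rewrite plus_IZR.
  replace (tau + IZR j * L - l - (IZR k + IZR j) * L) with (tau - l - IZR k * L) by ring. ring.
Qed.

Lemma Phi_shift j tau : Phi L l (tau + IZR j * L) = Phi L l tau + IZR j * (L - l).
Proof.
  apply Rle_antisym.
  - unfold Phi at 1. set (J := Jf L l (tau + IZR j * L)).
    replace J with ((J - j) + j)%Z by lia. rewrite phik_shift.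
    pose proof (phik_le_Phi (J - j) tau). lra.
  - pose proof (phik_le_Phi (Jf L l tau + j) (tau + IZR j * L)) as H.
    rewrite phik_shift in H. unfold Phi at 1. lra.
Qed.

Lemma Phi_low tau : 0 <= tau <= l -> Phi L l tau = 0.
Proof.
  intros H. apply Rle_antisym.
  - unfold Phi. set (k := Jf L l tau). unfold phik.
    destruct (Z.lt_ge_cases k 0) as [Hk|Hk].
    + assert (Hk' : (k + 1 <= 0)%Z) by lia. apply IZR_le in Hk'. rewrite plus_IZR in Hk'.
      assert ((IZR k + 1) * (L - l) <= 0) by nra. unfold Rmin; destruct Rle_dec; lra.
    + apply IZR_le in Hk. assert (0 <= IZR k * l) by nra. unfold Rmin; destruct Rle_dec; nra.
  - pose proof (phik_le_Phi (-1)%Z tau). unfold phik in H0. simpl in H0.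
    unfold Rmin in H0; destruct Rle_dec; lra.
Qed.

Lemma Phi_high tau : l <= tau <= L -> Phi L l tau = tau - l.
Proof.
  intros H. apply Rle_antisym.
  - unfold Phi. set (k := Jf L l tau). unfold phik.
    destruct (Z.lt_ge_cases k 0) as [Hk|Hk].
    + assert (Hk' : (k + 1 <= 0)%Z) by lia. apply IZR_le in Hk'. rewrite plus_IZR in Hk'.
      assert ((IZR k + 1) * (L - l) <= 0) by nra. unfold Rmin; destruct Rle_dec; lra.
    + apply IZR_le in Hk. assert (0 <= IZR k * l) by nra. unfold Rmin; destruct Rle_dec; nra.
  - pose proof (phik_le_Phi 0%Z tau). unfold phik in H0. simpl in H0.
    unfold Rmin in H0; destruct Rle_dec; lra.
Qed.

Variable kap : R.
Hypothesis Hkap : 0 <= kap <= 1.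

Lemma G_mono tau tau' : tau <= tau' -> 0 <= Gf L l kap tau' - Gf L l kap tau <= tau' - tau.
Proof.
  intros H. pose proof (Phi_mono tau tau' H). unfold Gf.
  assert (0 <= (1 - kap) * (Phi L l tau' - Phi L l tau) <= (tau' - tau)) by (split; nra).
  lra.
Qed.

Lemma G_shift j tau : Gf L l kap (tau + IZR j * L) =
  Gf L l kap tau + IZR j * (L - (1 - kap) * (L - l)).
Proof. unfold Gf. rewrite Phi_shift. ring. Qed.

Lemma G_low tau : 0 <= tau <= l -> Gf L l kap tau = tau.
Proof. intros. unfold Gf. rewrite Phi_low; auto. ring. Qed.

Lemma G_high tau : l <= tau <= L -> Gf L l kap tau = l + kap * (tau - l).
Proof. intros. unfold Gf. rewrite Phi_high; auto. ring. Qed.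

End G.


Lemma inj_interior L (g : R -> R) a b :
  (forall s t, a <= s <= b -> a <= t <= b -> eqmod L (g s) (g t) -> s = t) ->
  (forall s t, a < s < b -> a < t < b -> eqmod L (g s) (g t) -> s = t).
Proof. intros H s t Hs Ht. apply H; lra. Qed.

Lemma pm_sq e : (e = 1 \/ e = -1) -> e * e = 1.
Proof. intros [-> | ->]; ring. Qed.

Lemma STEPA (Li Li' a b : R) (iota phi pi c cb c' : R -> R) (m mb q : R)
  (Qi Qb : R -> Prop) :
  0 < Li' -> Li' < Li -> a < b ->
  unit_speed Li iota a b ->
  (forall s t, a <= s <= b -> a <= t <= b -> eqmod Li (iota s) (iota t) -> s = t) ->
  unit_speed Li' phi a b ->
  (forall s t, a < s < b -> a < t < b -> eqmod Li' (phi s) (phi t) -> s = t) ->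
  (forall x y, eqmod Li x y -> eqmod Li' (pi x) (pi y)) ->
  (forall t, a <= t <= b -> eqmod Li' (pi (iota t)) (phi t)) ->
  (forall x, Qi x <-> ~ exists t, a < t < b /\ eqmod Li x (iota t)) ->
  (forall y, Qb y <-> ~ exists t, a < t < b /\ eqmod Li' y (phi t)) ->
  0 < m -> segment_param Li Qi c m -> segment_param Li' Qb cb mb ->
  (forall s, 0 <= s <= m -> eqmod Li' (pi (c s)) (cb (s * mb / m))) ->
  segment_param Li Qi c' q ->
  Li - Li' <= q /\
  exists sg rho (g : R -> R), (sg = 1 \/ sg = -1) /\
    (forall y y', y <= y' -> 0 <= g y' - g y <= y' - y) /\
    (forall y, g (y + Li) = g y + Li') /\
    (forall y, eqmod Li' (pi y) (sg * g y + rho)).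
Proof.
  intros HL' HLL Hab Hui Hii Hup Hip Hpi Hpio HQi HQb Hm Sc Scb Hccb Sc'.
  assert (HL : 0 < Li) by lra.
  destruct (LIN Li iota a b HL ltac:(lra) Hui (inj_interior _ _ _ _ Hii)) as [e [He Hio]].
  set (u := iota a) in *.
  set (l := b - a). assert (Hldef : l = b - a) by reflexivity. clearbody l.
  assert (HlL : l < Li).
  { apply Rnot_le_lt. intro Hc.
    assert (a + Li = a).
    { apply Hii; try lra. eapply eqmod_trans; [apply Hio; lra|].
      replace (u + e * (a + Li - a)) with (u + IZR (Z.of_nat 0) * Li + e * Li) by (simpl; ring).
      destruct He as [-> | ->]; [exists 1%Z | exists (-1)%Z]; simpl; unfold u; ring. }
    lra. }
  destruct (LIN Li' phi a b HL' ltac:(lra) Hup Hip) as [e' [He' Hph]].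
  set (v := phi a) in *.
  assert (HlL' : l <= Li').
  { apply Rnot_lt_le. intro Hc. set (d := (l - Li') / 2).
    assert (a + d = a + d + Li').
    { apply Hip; unfold d in *; try lra.
      eapply eqmod_trans; [apply Hph; lra|].
      eapply eqmod_trans; [|apply eqmod_sym, Hph; lra].
      destruct He' as [-> | ->]; [exists (-1)%Z | exists 1%Z]; simpl; ring. }
    lra. }
  assert (Hio' : forall t, a <= t <= b -> eqmod Li (iota t) (u + e * (t - a))) by auto.
  assert (Hph' : forall t, a <= t <= b -> eqmod Li' (phi t) (v + e' * (t - a))) by auto.
  destruct (SEGQ Li a b iota u e Qi c m HL Hab ltac:(lra) He Hio' HQi Sc) as [Em Oc].
  destruct (SEGQ Li' a b phi v e' Qb cb mb HL' Hab ltac:(lra) He' Hph' HQb Scb) as [Emb Ocb].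
  destruct (SEGQ Li a b iota u e Qi c' q HL Hab ltac:(lra) He Hio' HQi Sc') as [Eq _].
  rewrite <- Hldef in Em, Emb, Eq, Oc, Ocb.
  split; [lra|].
  set (kap := mb / m).
  assert (Hkap : 0 <= kap <= 1).
  { unfold kap. split; [apply Rdiv_le_0_compat; lra|].
    apply Rmult_le_reg_r with m; auto. field_simplify; lra. }
  assert (HLi' : Li - (1 - kap) * (Li - l) = Li').
  { unfold kap. rewrite <- Em. field_simplify; lra. }
  assert (Hl0 : 0 < l < Li) by (lra).
  set (G := Gf Li l kap).
  assert (Pb : eqmod Li' (pi (u + e * l)) (v + e' * l)).
  { assert (Eb : eqmod Li (u + e * l) (iota b))
      by (apply eqmod_sym; eapply eqmod_trans; [apply (Hio b); lra|apply eqmod_eq; rewrite Hldef; ring]).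
    eapply eqmod_trans; [apply Hpi, Eb|].
    eapply eqmod_trans; [apply Hpio; lra|].
    eapply eqmod_trans; [apply (Hph' b); lra|apply eqmod_eq; rewrite Hldef; ring]. }
  assert (Pa : eqmod Li' (pi u) v).
  { eapply eqmod_trans; [apply Hpi, eqmod_refl|].
    unfold u. eapply eqmod_trans; [apply Hpio; lra|]. apply eqmod_refl. }
  assert (Hee : e * e = 1) by (apply pm_sq; auto).
  assert (PF : forall tau, 0 <= tau <= Li -> eqmod Li' (pi (u + e * tau)) (v + e' * G tau)).
  { intros tau Ht. destruct (Rle_dec tau l) as [Htl|Htl].
    - unfold G. rewrite G_low by lra.
      assert (Et : eqmod Li (u + e * tau) (iota (a + tau)))
        by (apply eqmod_sym; eapply eqmod_trans; [apply (Hio (a + tau)); lra|apply eqmod_eq; ring]).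
      eapply eqmod_trans; [apply Hpi, Et|].
      eapply eqmod_trans; [apply Hpio; lra|].
      eapply eqmod_trans; [apply (Hph' (a + tau)); lra|]. apply eqmod_eq; ring.
    - apply Rnot_le_lt in Htl. unfold G. rewrite G_high by lra.
      destruct (Oc Hm) as [Cf|Cb].
      + assert (C0 : eqmod Li' (cb 0) (v + e' * l)).
        { assert (C0' := Hccb 0 ltac:(lra)). replace (0 * mb / m) with 0 in C0' by (field; lra).
          assert (E0 : eqmod Li (c 0) (u + e * l)) by (eapply eqmod_trans; [apply Cf; lra|apply eqmod_eq; ring]).
          exact (eqmod_trans _ _ _ _ (eqmod_sym _ _ _ C0') (eqmod_trans _ _ _ _ (Hpi _ _ E0) Pb)). }
        assert (X : eqmod Li' (pi (u + e * tau)) (cb ((tau - l) * mb / m))).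
        { eapply eqmod_trans; [|apply Hccb; lra]. apply Hpi.
          eapply eqmod_trans; [|apply eqmod_sym, Cf; lra]. apply eqmod_eq; ring. }
        eapply eqmod_trans; [exact X|].
        destruct (Req_dec mb 0) as [Hmb0|Hmb0].
        * replace ((tau - l) * mb / m) with 0 by (rewrite Hmb0; field; lra).
          eapply eqmod_trans; [exact C0|]. unfold kap. rewrite Hmb0. apply eqmod_eq; field; lra.
        * destruct (Ocb ltac:(lra)) as [Df|Db].
          -- eapply eqmod_trans; [apply Df|].
             { split; [apply Rmult_le_pos; [apply Rmult_le_pos|apply Rlt_le, Rinv_0_lt_compat]; lra|].
               apply Rmult_le_reg_r with m; auto. field_simplify; [|lra].
               assert ((tau - l) * mb <= m * mb) by (apply Rmult_le_compat_r; lra). lra. }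
             apply eqmod_eq. unfold kap. field. lra.
          -- exfalso. assert (eqmod Li' (v + e' * l) v).
             { eapply eqmod_trans; [apply eqmod_sym, C0|]. eapply eqmod_trans; [apply Db; lra|].
               apply eqmod_eq; ring. }
             destruct H as [k Hk].
             assert (e' * l = 0) by (apply eqmod_small with Li'; [lra|exists k; lra|destruct He' as [E|E]; rewrite E; rabs]).
             destruct He' as [E|E]; rewrite E in *; lra.
      + assert (C0 : eqmod Li' (cb 0) v).
        { assert (C0' := Hccb 0 ltac:(lra)). replace (0 * mb / m) with 0 in C0' by (field; lra).
          assert (E0 : eqmod Li (c 0) u) by (eapply eqmod_trans; [apply Cb; lra|apply eqmod_eq; ring]).
          exact (eqmod_trans _ _ _ _ (eqmod_sym _ _ _ C0') (eqmod_trans _ _ _ _ (Hpi _ _ E0) Pa)). }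
        assert (X : eqmod Li' (pi (u + e * tau)) (cb ((Li - tau) * mb / m))).
        { eapply eqmod_trans; [|apply Hccb; lra]. apply Hpi.
          eapply eqmod_trans; [|apply eqmod_sym, Cb; lra].
          destruct He as [-> | ->]; [exists 1%Z | exists (-1)%Z]; simpl; ring. }
        eapply eqmod_trans; [exact X|].
        destruct (Req_dec mb 0) as [Hmb0|Hmb0].
        * replace ((Li - tau) * mb / m) with 0 by (rewrite Hmb0; field; lra).
          eapply eqmod_trans; [exact C0|]. unfold kap. rewrite Hmb0.
          assert (l = Li') by lra.
          destruct He' as [-> | ->]; [exists (-1)%Z | exists 1%Z]; simpl;
          replace (0 / m) with 0 by (field; lra); lra.
        * destruct (Ocb ltac:(lra)) as [Df|Db].
          -- exfalso. assert (eqmod Li' (v + e' * l) v).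
             { eapply eqmod_trans; [|exact C0]. eapply eqmod_trans; [|apply eqmod_sym, Df; lra].
               apply eqmod_eq; ring. }
             destruct H as [k Hk].
             assert (e' * l = 0) by (apply eqmod_small with Li'; [lra|exists k; lra|destruct He' as [E|E]; rewrite E; rabs]).
             destruct He' as [E|E]; rewrite E in *; lra.
          -- eapply eqmod_trans; [apply Db|].
             { split; [apply Rmult_le_pos; [apply Rmult_le_pos|apply Rlt_le, Rinv_0_lt_compat]; lra|].
               apply Rmult_le_reg_r with m; auto. field_simplify; [|lra].
               assert ((Li - tau) * mb <= m * mb) by (apply Rmult_le_compat_r; lra). lra. }
             assert (Hk : v - e' * ((Li - tau) * mb / m) - (v + e' * (l + kap * (tau - l))) = - e' * Li').
             { rewrite <- HLi'. unfold kap. field. lra. }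
             destruct He' as [-> | ->]; [exists (-1)%Z | exists 1%Z]; simpl; lra. }
  assert (PF2 : forall tau, eqmod Li' (pi (u + e * tau)) (v + e' * G tau)).
  { intros tau. destruct (reduce_mod Li tau HL) as [t0 [k [Hk Ht0]]].
    eapply eqmod_trans; [apply Hpi|eapply eqmod_trans; [apply (PF t0); lra|]].
    - rewrite Hk. destruct He as [-> | ->]; [exists k | exists (-k)%Z]; rewrite ?opp_IZR; ring.
    - assert (H : G tau = G t0 + IZR k * Li').
      { unfold G. rewrite Hk. rewrite G_shift by auto. rewrite HLi'. reflexivity. }
      rewrite H. destruct He' as [-> | ->]; [exists (-k)%Z | exists k]; rewrite ?opp_IZR; ring. }
  exists (e * e'), v, (fun y => e * G (e * (y - u))).
  split; [destruct He as [E1|E1], He' as [E2|E2]; rewrite E1, E2; [left|right|right|left]; ring|].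
  split; [|split].
  - intros y y' Hy. destruct He as [-> | ->].
    + rewrite !Rmult_1_l. pose proof (G_mono Li l Hl0 kap Hkap (y - u) (y' - u) ltac:(lra)). fold G in H. lra.
    + pose proof (G_mono Li l Hl0 kap Hkap (-1 * (y' - u)) (-1 * (y - u)) ltac:(lra)).
      fold G in H. lra.
  - intros y. destruct He as [-> | ->].
    + replace (1 * (y + Li - u)) with (1 * (y - u) + IZR 1 * Li) by (simpl; ring).
      unfold G. rewrite G_shift by auto. rewrite HLi'. simpl. ring.
    + replace (-1 * (y + Li - u)) with (-1 * (y - u) + IZR (-1) * Li) by (simpl; ring).
      unfold G. rewrite G_shift by auto. rewrite HLi'. simpl. ring.
  - intros y. eapply eqmod_trans; [apply Hpi|eapply eqmod_trans; [apply (PF2 (e * (y - u)))|]].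
    + apply eqmod_eq. rewrite <- Rmult_assoc, Hee. ring.
    + apply eqmod_eq. replace (e * e' * (e * G (e * (y - u)))) with ((e * e) * e' * G (e * (y - u))) by ring.
      rewrite Hee. ring.
Qed.


Section EVC.
Variables (X : Type) (d : X -> X -> R) (Rr : R)
  (L : nat -> R) (alpha : nat -> R -> X) (kind : nat -> bool) (a b : nat -> R)
  (iota phi pi : nat -> R -> R).
Hypothesis HT : tightening_seq d Rr L alpha kind a b iota phi pi.
Hypothesis HCD : completely_disjoint L kind a b iota phi.

Lemma Pint_eqmod j y y' : eqmod (L j) y y' -> Pint L kind a b iota phi j y -> Pint L kind a b iota phi j y'.
Proof.
  destruct HT as [_ [_ [_ [_ HB]]]].
  revert y y'. induction j as [|j IH]; intros y y' Hy H; simpl in *; auto.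
  destruct (kind j) eqn:Hk.
  - destruct H as [t [Ht [HP He]]]. exists t. split; auto. split; auto.
    eapply eqmod_trans; [apply eqmod_sym, Hy|exact He].
  - destruct (HB j Hk) as [HL _]. rewrite HL in Hy. eapply IH; eauto.
Qed.

Let y x k := picomp pi k x.
Let av x k := alpha k (y x k).

Lemma step_const x k : (kind k = false \/ ~ Qset L a b iota k (y x k)) -> av x (S k) = av x k.
Proof.
  destruct HT as [HLp [Hc [Hwd [HA HB]]]].
  unfold av, y. simpl. set (z := picomp pi k x).
  destruct (kind k) eqn:Hk; intros [H|H]; try discriminate.
  - apply NNPP in H. destruct H as [t [Ht He]].
    destruct (HA k Hk) as [_ [_ [_ [_ [_ [_ [Hal [Hpio _]]]]]]]].
    transitivity (alpha (S k) (phi k t)).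
    + apply (proj1 (Hc (S k))). eapply eqmod_trans; [apply Hwd, He|]. apply Hpio; lra.
    + rewrite <- Hal by lra. apply (proj1 (Hc k)). apply eqmod_sym, He.
  - destruct (HB k Hk) as [HL [Hi [Hp [Hal Hpio]]]].
    transitivity (alpha (S k) (phi k z)).
    + apply (proj1 (Hc (S k))). eapply eqmod_trans; [apply Hwd, eqmod_sym, Hi|]. apply Hpio.
    + rewrite <- Hal. apply (proj1 (Hc k)). apply Hi.
  - destruct (HB k Hk) as [HL [Hi [Hp [Hal Hpio]]]].
    transitivity (alpha (S k) (phi k z)).
    + apply (proj1 (Hc (S k))). eapply eqmod_trans; [apply Hwd, eqmod_sym, Hi|]. apply Hpio.
    + rewrite <- Hal. apply (proj1 (Hc k)). apply Hi.
Qed.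

Lemma notP_start x k : kind k = true -> Qset L a b iota k (y x k) ->
  ~ Pint L kind a b iota phi (S k) (y x (S k)).
Proof.
  destruct HT as [HLp [Hc [Hwd [HA HB]]]]. intros Hk HQ.
  destruct (HA k Hk) as [_ [_ [_ [_ [_ [_ [_ [_ [c [m [cb [mb [Hm [Sc [Scb Hccb]]]]]]]]]]]]]]].
  destruct Sc as [_ [_ [_ HQc]]]. destruct Scb as [Hmb [_ [_ HQb]]].
  apply HQc in HQ. destruct HQ as [s [Hs Hse]].
  assert (Hb : Qbar L a b phi k (y x (S k))).
  { apply HQb. exists (s * mb / m). split.
    - split; [apply Rmult_le_pos; [apply Rmult_le_pos|apply Rlt_le, Rinv_0_lt_compat]; lra|].
      apply Rmult_le_reg_r with m; auto. field_simplify; [|lra].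
      assert (s * mb <= m * mb) by (apply Rmult_le_compat_r; lra). lra.
    - unfold y. simpl. eapply eqmod_trans; [apply Hwd, Hse|]. apply Hccb; auto. }
  intros HP. simpl in HP. rewrite Hk in HP. destruct HP as [t [Ht [_ He]]].
  apply Hb. exists t. split; auto.
Qed.

Lemma notP_prop x k : ~ Pint L kind a b iota phi k (y x k) ->
  ~ Pint L kind a b iota phi (S k) (y x (S k)).
Proof.
  destruct HT as [HLp [Hc [Hwd [HA HB]]]]. intros HnP HP.
  unfold y in *. simpl in HP. set (z := picomp pi k x) in *.
  destruct (kind k) eqn:Hk.
  - assert (HnQ : ~ Qset L a b iota k z) by (intro HQ; apply HnP, (HCD k Hk); auto).
    apply NNPP in HnQ. destruct HnQ as [t0 [Ht0 He0]].
    destruct HP as [t [Ht [HPi He]]].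
    destruct (HA k Hk) as [_ [_ [_ [_ [_ [Hinj [_ [Hpio _]]]]]]]].
    assert (t = t0).
    { apply Hinj; auto. eapply eqmod_trans; [apply eqmod_sym, He|].
      eapply eqmod_trans; [apply Hwd, He0|]. apply Hpio; lra. }
    subst t0. apply HnP. eapply Pint_eqmod; [apply eqmod_sym, He0|exact HPi].
  - destruct (HB k Hk) as [HL [Hi [Hp [Hal Hpio]]]].
    apply HnP. eapply Pint_eqmod; [|exact HP]. rewrite <- HL.
    eapply eqmod_trans; [apply Hwd, eqmod_sym, Hi|]. eapply eqmod_trans; [apply Hpio|]. rewrite HL; apply Hp.
Qed.

Lemma EVC x : exists N, forall k, (N <= k)%nat -> av x k = av x N.
Proof.
  destruct (classic (exists k, kind k = true /\ Qset L a b iota k (y x k))) as [[k0 [Hk0 HQ0]]|Hn].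
  - exists (S k0).
    assert (NP : forall j, (S k0 <= j)%nat -> ~ Pint L kind a b iota phi j (y x j)).
    { intros j Hj. induction Hj as [|j Hj IH].
      - now apply notP_start.
      - now apply notP_prop. }
    intros k Hk. induction Hk as [|k Hk IH]; auto. rewrite <- IH.
    apply step_const. destruct (kind k) eqn:Hkk; [right|now left].
    intro HQ. apply (NP k Hk). apply (HCD k Hkk); auto.
  - exists 0%nat. intros k _. induction k as [|k IH]; auto. rewrite <- IH.
    apply step_const. destruct (kind k) eqn:Hkk; [right|now left].
    intro HQ. apply Hn. exists k. auto.
Qed.

End EVC.


Definition mono1 (F : R -> R) := forall x x', x <= x' -> 0 <= F x' - F x <= x' - x.

Definition StepP (L : nat -> R) (pi : nat -> R -> R) (i : nat) (sg rho : R) (g : R -> R) :=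
  (sg = 1 \/ sg = -1) /\ mono1 g /\ (forall y, g (y + L i) = g y + L (S i)) /\
  (forall y, eqmod (L (S i)) (pi i y) (sg * g y + rho)).

Fixpoint stf (SG RHO : nat -> R) (GG : nat -> R -> R) (n : nat) : R * R * (R -> R) :=
  match n with
  | O => (1, 0, fun x => x)
  | S i => let p := stf SG RHO GG i in
      (SG i * fst (fst p), SG i * GG i (snd (fst p)) + RHO i,
       fun x => fst (fst p) * (GG i (fst (fst p) * snd p x + snd (fst p)) - GG i (snd (fst p))))
  end.

Section Seq.
Variables (L : nat -> R) (pi : nat -> R -> R) (SG RHO : nat -> R) (GG : nat -> R -> R).
Hypothesis HLp : forall i, 0 < L i.
Hypothesis Hwd : forall i x y, eqmod (L i) x y -> eqmod (L (S i)) (pi i x) (pi i y).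
Hypothesis HS : forall i, StepP L pi i (SG i) (RHO i) (GG i).

Let Ss n := fst (fst (stf SG RHO GG n)).
Let Rs n := snd (fst (stf SG RHO GG n)).
Let Fs n := snd (stf SG RHO GG n).

Lemma H_props (s r : R) (g : R -> R) Li Li' : (s = 1 \/ s = -1) -> mono1 g ->
  (forall y, g (y + Li) = g y + Li') ->
  let H := fun y => s * (g (s * y + r) - g r) in
  H 0 = 0 /\ mono1 H /\ H Li = Li'.
Proof.
  intros Hs Hg Hp H. unfold H. split; [|split].
  - rewrite Rmult_0_r, Rplus_0_l. ring.
  - intros x x' Hx. destruct Hs as [-> | ->].
    + specialize (Hg (1 * x + r) (1 * x' + r) ltac:(lra)). lra.
    + specialize (Hg (-1 * x' + r) (-1 * x + r) ltac:(lra)). lra.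
  - destruct Hs as [-> | ->].
    + replace (1 * Li + r) with (r + Li) by ring. rewrite Hp. ring.
    + specialize (Hp (-1 * Li + r)). replace (-1 * Li + r + Li) with r in Hp by ring.
      rewrite Hp. ring.
Qed.

Lemma stf_S n : Ss (S n) = SG n * Ss n /\ Rs (S n) = SG n * GG n (Rs n) + RHO n /\
  forall x, Fs (S n) x = Ss n * (GG n (Ss n * Fs n x + Rs n) - GG n (Rs n)).
Proof. unfold Ss, Rs, Fs. simpl. auto. Qed.

Lemma INV n : (Ss n = 1 \/ Ss n = -1) /\ Fs n 0 = 0 /\ mono1 (Fs n) /\ Fs n (L 0) = L n /\
  forall x, eqmod (L n) (picomp pi n x) (Ss n * Fs n x + Rs n).
Proof.
  induction n as [|n IH].
  - unfold Ss, Fs, Rs; simpl. split; [now left|]. split; auto. split.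
    + intros x x' H; lra.
    + split; auto. intros x. apply eqmod_diff. exists 0%Z. simpl. ring.
  - destruct IH as [Hs [F0 [Fm [FL Fe]]]]. destruct (HS n) as [Hsg [Hgm [Hgp Hpe]]].
    destruct (stf_S n) as [E1 [E2 E3]].
    destruct (H_props (Ss n) (Rs n) (GG n) (L n) (L (S n)) Hs Hgm Hgp) as [H0 [Hm HL]].
    rewrite E1, E2. split; [destruct Hs as [-> | ->]; destruct Hsg as [-> | ->]; [left|right|right|left]; ring|].
    split; [rewrite E3, F0; exact H0|]. split; [|split].
    + intros x x' Hx. rewrite !E3. pose proof (Fm x x' Hx).
      pose proof (Hm (Fs n x) (Fs n x') ltac:(lra)). simpl in H0. lra.
    + rewrite E3, FL. exact HL.
    + intros x. simpl. eapply eqmod_trans; [apply Hwd, Fe|]. eapply eqmod_trans; [apply Hpe|].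
      apply eqmod_diff. exists 0%Z. rewrite E3.
      assert (Hss : Ss n * Ss n = 1) by (destruct Hs as [-> | ->]; ring).
      simpl. transitivity (SG n * (1 - Ss n * Ss n) * (GG n (Ss n * Fs n x + Rs n) - GG n (Rs n))); [ring|].
      rewrite Hss. ring.
Qed.

Lemma MONO n x : 0 <= x -> 0 <= Fs (S n) x <= Fs n x.
Proof.
  intros Hx. destruct (INV n) as [Hs [F0 [Fm _]]]. destruct (HS n) as [_ [Hgm [Hgp _]]].
  destruct (stf_S n) as [_ [_ E3]].
  destruct (H_props (Ss n) (Rs n) (GG n) (L n) (L (S n)) Hs Hgm Hgp) as [H0 [Hm _]].
  rewrite E3. pose proof (Fm 0 x Hx). pose proof (Hm 0 (Fs n x) ltac:(lra)). simpl in *. lra.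
Qed.

Lemma MONO' n x : x <= 0 -> Fs n x <= Fs (S n) x <= 0.
Proof.
  intros Hx. destruct (INV n) as [Hs [F0 [Fm _]]]. destruct (HS n) as [_ [Hgm [Hgp _]]].
  destruct (stf_S n) as [_ [_ E3]].
  destruct (H_props (Ss n) (Rs n) (GG n) (L n) (L (S n)) Hs Hgm Hgp) as [H0 [Hm _]].
  rewrite E3. pose proof (Fm x 0 Hx). pose proof (Hm (Fs n x) 0 ltac:(lra)). simpl in *. lra.
Qed.

Lemma FCONV x : ex_finite_lim_seq (fun n => Fs n x).
Proof.
  destruct (Rle_dec 0 x) as [Hx|Hx].
  - apply ex_finite_lim_seq_decr with 0.
    + intros n. apply MONO; auto.
    + intros n. destruct (INV n) as [_ [F0 [Fm _]]]. pose proof (Fm 0 x Hx). lra.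
  - apply ex_finite_lim_seq_incr with 0.
    + intros n. apply MONO'; lra.
    + intros n. destruct (INV n) as [_ [F0 [Fm _]]]. pose proof (Fm x 0 ltac:(lra)). lra.
Qed.

End Seq.


Lemma CD_lip L L' x y x' y' : 0 < L -> 0 < L' ->
  cdist L' x' y' <= cdist L x y + Rabs ((x' - y') - (x - y)) + (Rabs (x - y) / L + 1) * Rabs (L' - L).
Proof.
  intros HL HL'. destruct (cdist_char L x y HL) as [[C0 C1] [_ [k Hk]]].
  destruct (cdist_char L' x' y' HL') as [_ [Hle _]].
  assert (Hkb : Rabs (IZR k) <= Rabs (x - y) / L + 1).
  { assert (Rabs (IZR k * L) <= Rabs (x - y) + L / 2).
    { rewrite Hk in C1.
      pose proof (Rabs_triang (x - y) (- (x - y - IZR k * L))) as H. rewrite Rabs_Ropp in H.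
      replace ((x - y) + - (x - y - IZR k * L)) with (IZR k * L) in H by ring. lra. }
    rewrite Rabs_mult, (Rabs_pos_eq L) in H by lra.
    assert (Rabs (IZR k) <= (Rabs (x - y) + L / 2) / L).
    { apply Rmult_le_reg_r with L; auto. field_simplify; lra. }
    assert ((Rabs (x - y) + L / 2) / L = Rabs (x - y) / L + / 2) by (field; lra). lra. }
  eapply Rle_trans; [apply (Hle k)|].
  replace (x' - y' - IZR k * L') with ((x - y - IZR k * L) + ((x' - y') - (x - y)) + (- IZR k * (L' - L))) by ring.
  eapply Rle_trans; [apply Rabs_triang|]. eapply Rle_trans; [apply Rplus_le_compat_r, Rabs_triang|].
  rewrite <- Hk. rewrite Rabs_mult, Rabs_Ropp.
  assert (Rabs (IZR k) * Rabs (L' - L) <= (Rabs (x - y) / L + 1) * Rabs (L' - L))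
    by (apply Rmult_le_compat_r; [apply Rabs_pos|auto]).
  lra.
Qed.

Lemma lim_lin (c K1 K2 : R) (e f : nat -> R) : is_lim_seq e 0 -> is_lim_seq f 0 ->
  is_lim_seq (fun n => c + K1 * e n + K2 * f n) c.
Proof.
  intros He Hf.
  pose proof (is_lim_seq_plus' _ _ _ _ (is_lim_seq_plus' _ _ _ _ (is_lim_seq_const c)
     (is_lim_seq_mult' _ _ _ _ (is_lim_seq_const K1) He)) (is_lim_seq_mult' _ _ _ _ (is_lim_seq_const K2) Hf)) as H.
  replace (c + K1 * 0 + K2 * 0) with c in H by ring. exact H.
Qed.

Lemma lim_absdiff (u : nat -> R) (p : R) : is_lim_seq u p -> is_lim_seq (fun n => Rabs (u n - p)) 0.
Proof.
  intros H. replace 0 with (Rabs (p - p)) by (rewrite Rminus_diag; apply Rabs_R0).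
  apply (is_lim_seq_abs (fun n => u n - p) (p - p)). apply is_lim_seq_minus'; auto.
  apply is_lim_seq_const.
Qed.

Lemma CONT (Ls u v : nat -> R) (Linf p q M : R) : 0 < Linf -> (forall i, Linf <= Ls i) ->
  is_lim_seq Ls Linf -> is_lim_seq u p -> is_lim_seq v q -> (forall i, Rabs (u i - v i) <= M) ->
  is_lim_seq (fun i => cdist (Ls i) (u i) (v i)) (cdist Linf p q).
Proof.
  intros HL HLi Hl Hu Hv HM.
  set (c := cdist Linf p q).
  set (e := fun n => Rabs ((u n - v n) - (p - q))).
  set (f := fun n => Rabs (Ls n - Linf)).
  assert (He : is_lim_seq e 0).
  { apply (lim_absdiff (fun n => u n - v n) (p - q)). apply (is_lim_seq_minus' u v p q Hu Hv). }
  assert (Hf : is_lim_seq f 0) by (apply lim_absdiff; auto).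
  apply is_lim_seq_le_le with (u := fun n => c + (-1) * e n + (- (M / Linf + 1)) * f n)
                              (w := fun n => c + 1 * e n + (Rabs (p - q) / Linf + 1) * f n).
  - intros n. assert (HLn : 0 < Ls n) by (specialize (HLi n); lra). split.
    + pose proof (CD_lip (Ls n) Linf (u n) (v n) p q HLn HL).
      assert (Rabs (u n - v n) / Ls n <= M / Linf).
      { apply Rle_trans with (Rabs (u n - v n) / Linf).
        - apply Rmult_le_compat_l; [apply Rabs_pos|]. apply Rinv_le_contravar; auto.
        - apply Rmult_le_compat_r; [apply Rlt_le, Rinv_0_lt_compat; auto|auto]. }
      assert (Rabs ((p - q) - (u n - v n)) = e n) by (unfold e; rewrite <- Rabs_Ropp; f_equal; ring).
      assert (Rabs (Linf - Ls n) = f n) by (unfold f; rewrite <- Rabs_Ropp; f_equal; ring).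
      assert ((Rabs (u n - v n) / Ls n + 1) * f n <= (M / Linf + 1) * f n)
        by (apply Rmult_le_compat_r; [unfold f; apply Rabs_pos|lra]).
      replace (c + -1 * e n + - (M / Linf + 1) * f n) with (c - e n - (M / Linf + 1) * f n) by ring.
      rewrite H1, H2 in H. unfold c. lra.
    + pose proof (CD_lip Linf (Ls n) p q (u n) (v n) HL HLn). unfold c, e, f. lra.
  - apply lim_lin; auto.
  - apply lim_lin; auto.
Qed.


Theorem lemma4p3 (X : Type) (d : X -> X -> R) (Rr : R)
  (L : nat -> R) (alpha : nat -> R -> X) (kind : nat -> bool) (a b : nat -> R)
  (iota phi pi : nat -> R -> R) (qlen : nat -> R) (sigma : Sinf L pi -> R) :
  0 <= Rr -> is_metric d -> rough_geodesic d Rr ->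
  tightening_seq d Rr L alpha kind a b iota phi pi ->
  completely_disjoint L kind a b iota phi ->
  Qlengths L kind a b iota qlen ->
  (exists s, is_series qlen s /\ s < L 0%nat) ->
  (forall z, qmap L pi (sigma z) = z) ->
  exists alpha_inf : Sinf L pi -> X,
    (forall z eps, 0 < eps -> exists N : nat, forall i : nat, (N <= i)%nat ->
       d (alpha i (picomp pi i (sigma z))) (alpha_inf z) < eps) /\
    (exists Linf, 0 < Linf /\ exists e : Sinf L pi -> R,
       (forall z w, delta L pi (sigma z) (sigma w) = cdist Linf (e z) (e w)) /\
       (forall t, exists z, eqmod Linf (e z) t)) /\
    (forall z w, d (alpha_inf z) (alpha_inf w) <= delta L pi (sigma z) (sigma w) + Rr).
Proof.
  intros HR Hmet Hrg HT HCD HQl [s [Hs Hsl]] Hsig.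
  pose proof HT as [HLp [Hc [Hwd [HA HB]]]].
  assert (STEP : forall i, L i - L (S i) <= qlen i /\ 0 <= qlen i /\ L (S i) <= L i /\
                   exists sg rho g, StepP L pi i sg rho g).
  { intros i. destruct (kind i) eqn:Hk.
    - destruct (HA i Hk) as [HLL [Hba [Hui [Hii [Hup [Hip [Hal [Hpio [c [m [cb [mb [Hm [Sc [Scb Hccb]]]]]]]]]]]]]]].
      destruct (proj1 (HQl i) Hk) as [c' Sc'].
      assert (Hab : a i < b i) by (pose proof (HLp 0%nat); lra).
      destruct (STEPA (L i) (L (S i)) (a i) (b i) (iota i) (phi i) (pi i) c cb c' m mb (qlen i)
        (Qset L a b iota i) (Qbar L a b phi i) (HLp (S i)) HLL Hab Hui Hii Hup Hip (Hwd i) Hpio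
        (fun x => iff_refl _) (fun y => iff_refl _) Hm Sc Scb Hccb Sc')
        as [Hq [sg [rho [g [H1 [H2 [H3 H4]]]]]]].
      split; auto. split; [destruct Sc' as [Hq0 _]; auto|]. split; [lra|].
      exists sg, rho, g. exact (conj H1 (conj H2 (conj H3 H4))).
    - destruct (HB i Hk) as [HL [Hi [Hp [Hal Hpio]]]].
      rewrite (proj2 (HQl i) Hk). split; [lra|]. split; [lra|]. split; [lra|].
      exists 1, 0, (fun y => y). split; [now left|]. split; [intros y y' H; lra|]. split.
      + intros y. rewrite HL. reflexivity.
      + intros y. eapply eqmod_trans; [apply (Hwd i y (iota i y)), eqmod_sym, Hi|].
        eapply eqmod_trans; [apply Hpio|]. rewrite HL.
        eapply eqmod_trans; [apply Hp|]. apply eqmod_eq. ring. }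
  assert (CH : forall i, {p : R * R * (R -> R) | StepP L pi i (fst (fst p)) (snd (fst p)) (snd p)}).
  { intros i. apply constructive_indefinite_description.
    destruct (STEP i) as [_ [_ [_ [sg [rho [g Hg]]]]]]. exists (sg, rho, g). exact Hg. }
  set (SG := fun i => fst (fst (proj1_sig (CH i)))).
  set (RHO := fun i => snd (fst (proj1_sig (CH i)))).
  set (GG := fun i => snd (proj1_sig (CH i))).
  assert (HS : forall i, StepP L pi i (SG i) (RHO i) (GG i)) by (intro i; exact (proj2_sig (CH i))).
  set (Fs := fun n => snd (stf SG RHO GG n)).
  pose proof (INV L pi SG RHO GG Hwd HS) as INV'.
  assert (Hq0 : forall i, 0 <= qlen i) by (intro i; apply STEP).
  assert (Hsum : is_lim_seq (sum_n qlen) s) by exact Hs.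
  assert (Hsum_le : forall n, sum_n qlen n <= s).
  { apply is_lim_seq_incr_compare; auto. intros n. rewrite sum_Sn. unfold plus; simpl.
    specialize (Hq0 (S n)). lra. }
  assert (HLS : forall n, L 0%nat - sum_n qlen n <= L (S n)).
  { induction n as [|n IH].
    - rewrite sum_O. destruct (STEP 0%nat) as [H1 _]. lra.
    - rewrite sum_Sn. unfold plus; simpl. destruct (STEP (S n)) as [H1 _]. lra. }
  assert (HLlow : forall n, L 0%nat - s <= L n).
  { intros [|n].
    - specialize (Hsum_le 0%nat). rewrite sum_O in Hsum_le. specialize (Hq0 0%nat). lra.
    - specialize (HLS n). specialize (Hsum_le n). lra. }
  assert (HLdec : forall n, L (S n) <= L n) by (intro n; apply STEP).
  destruct (ex_finite_lim_seq_decr L (L 0%nat - s) HLdec HLlow) as [Linf HLinf].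
  assert (HLinf_pos : L 0%nat - s <= Linf).
  { pose proof (is_lim_seq_le (fun _ => L 0%nat - s) L (L 0%nat - s) Linf HLlow (is_lim_seq_const _) HLinf).
    simpl in H. exact H. }
  assert (HLinf_le : forall n, Linf <= L n) by (apply is_lim_seq_decr_compare; auto).
  assert (HLinf0 : 0 < Linf) by lra.
  set (finf := fun x => real (Lim_seq (fun n => Fs n x))).
  assert (Hfinf : forall x, is_lim_seq (fun n => Fs n x) (finf x)).
  { intros x. destruct (FCONV L pi SG RHO GG Hwd HS x) as [l Hl].
    assert (E : Lim_seq (fun n => Fs n x) = Finite l) by (apply is_lim_seq_unique; exact Hl).
    unfold finf. rewrite E. exact Hl. }
  assert (Hf0 : finf 0 = 0).
  { unfold finf. rewrite (is_lim_seq_unique _ 0); [reflexivity|].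
    apply is_lim_seq_ext with (u := fun _ => 0); [|apply is_lim_seq_const].
    intros n. symmetry. apply (INV' n). }
  assert (HfL : finf (L 0%nat) = Linf).
  { unfold finf. rewrite (is_lim_seq_unique _ Linf); [reflexivity|].
    apply is_lim_seq_ext with (u := L); [|auto].
    intros n. symmetry. apply (INV' n). }
  assert (HFlip : forall n x y, Rabs (Fs n x - Fs n y) <= Rabs (x - y)).
  { intros n x y. destruct (INV' n) as [_ [_ [Fm _]]]. change (mono1 (Fs n)) in Fm.
    destruct (Rle_dec x y) as [Hxy|Hxy].
    - pose proof (Fm x y Hxy). rewrite (Rabs_left1 (x - y)) by lra. rabs.
    - pose proof (Fm y x ltac:(lra)). rewrite (Rabs_pos_eq (x - y)) by lra. rabs. }
  assert (Hflip : forall x y, Rabs (finf x - finf y) <= Rabs (x - y)).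
  { intros x y.
    pose proof (is_lim_seq_abs _ _ (is_lim_seq_minus' _ _ _ _ (Hfinf x) (Hfinf y))) as H.
    pose proof (is_lim_seq_le _ (fun _ => Rabs (x - y)) _ _ (fun n => HFlip n x y) H (is_lim_seq_const _)).
    simpl in H0. exact H0. }
  assert (Hfc : continuity finf).
  { apply lip_cont. exact Hflip. }
  assert (DLlim : forall x y, is_lim_seq (fun i => cdist (L i) (picomp pi i x) (picomp pi i y))
                                     (cdist Linf (finf x) (finf y))).
  { intros x y.
    apply is_lim_seq_ext with (u := fun i => cdist (L i) (Fs i x) (Fs i y)).
    - intros n. destruct (INV' n) as [Hsn [_ [_ [_ He]]]].
      pose proof (cdist_eqmod (L n) _ _ _ _ (HLp n) (eqmod_sym _ _ _ (He x)) (eqmod_sym _ _ _ (He y))) as E.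
      rewrite E. symmetry. apply cdist_aff; auto.
    - apply CONT with (M := Rabs (x - y)); auto. }
  assert (DL : forall x y, delta L pi x y = cdist Linf (finf x) (finf y)).
  { intros x y. unfold delta. rewrite (is_lim_seq_unique _ _ (DLlim x y)). reflexivity. }
  assert (AI : forall z, {v : X | exists N, forall k, (N <= k)%nat -> alpha k (picomp pi k (sigma z)) = v}).
  { intros z. apply constructive_indefinite_description.
    destruct (EVC X d Rr L alpha kind a b iota phi pi HT HCD (sigma z)) as [N HN].
    exists (alpha N (picomp pi N (sigma z))), N. intros k Hk. apply (HN k Hk). }
  destruct Hmet as [Hd0 [Hdeq [Hdsym Hdtri]]].
  exists (fun z => proj1_sig (AI z)). split; [|split].
  - intros z eps Heps. destruct (proj2_sig (AI z)) as [N HN]. exists N. intros i Hi.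
    rewrite HN by auto. rewrite (proj2 (Hdeq _ _) eq_refl). exact Heps.
  - exists Linf. split; auto. exists (fun z => finf (sigma z)). split.
    + intros z w. apply DL.
    + intros t. destruct (reduce_mod Linf t HLinf0) as [t0 [k [Hk Ht0]]].
      destruct (IVT_gen finf 0 (L 0%nat) t0 Hfc) as [x [Hx Hfx]].
      { rewrite Hf0, HfL. unfold Rmin, Rmax; destruct Rle_dec; lra. }
      exists (qmap L pi x). set (w := sigma (qmap L pi x)).
      assert (Hw : qmap L pi w = qmap L pi x) by apply Hsig.
      apply (f_equal (@proj1_sig _ _)) in Hw. simpl in Hw.
      assert (E := f_equal (fun P : R -> Prop => P w) Hw). simpl in E.
      assert (Hww : delta L pi w w = 0) by (rewrite DL; apply cdist_refl; auto).
      rewrite E in Hww. rewrite DL in Hww. apply cdist_zero in Hww; auto.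
      eapply eqmod_trans; [apply eqmod_sym, Hww|]. rewrite Hfx, Hk. apply eqmod_sym, eqmod_kL.
  - intros z w. destruct (proj2_sig (AI z)) as [N1 H1]. destruct (proj2_sig (AI w)) as [N2 H2].
    set (vz := proj1_sig (AI z)) in *. set (vw := proj1_sig (AI w)) in *.
    assert (Hev : eventually (fun n => d vz vw - Rr <= cdist (L n) (picomp pi n (sigma z)) (picomp pi n (sigma w)))).
    { exists (max N1 N2). intros n Hn. rewrite <- (H1 n) by lia. rewrite <- (H2 n) by lia.
      pose proof (proj2 (Hc n) (picomp pi n (sigma z)) (picomp pi n (sigma w))). lra. }
    pose proof (is_lim_seq_le_loc _ _ _ _ Hev (is_lim_seq_const _) (DLlim (sigma z) (sigma w))) as H.
    simpl in H. rewrite DL. lra.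
Qed.
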